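(* Consider the multi-sender unicast index-coding instance with $N=5$ messages, $K=3$ senders with $\mathcal S_1=\{1,2,3\}$, $\mathcal S_2=\{2,3,4\}$, $\mathcal S_3=\{1,2,4,5\}$, each with link capacity $C_k=1$, and receiver side information $\mathcal A_1=\{4,5\}$, $\mathcal A_2=\{1,3,5\}$, $\mathcal A_3=\{1,2\}$, $\mathcal A_4=\{2,3,5\}$, $\mathcal A_5=\{3\}$. Its capacity region is $$\mathcal C=\left\{(R_1,\dots,R_5)\in\mathbb R_+^5:\begin{array}{l}R_3\le2,\ R_5\le1,\ R_1+R_3\le3,\ R_1+R_5\le2,\ R_4+R_5\le2,\\ R_1+R_2+R_5\le3,\ R_1+R_4+R_5\le3,\ R_2+R_4+R_5\le3,\ R_3+R_4+R_5\le3\end{array}\right\}.$$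
   Context: Model. $N$ independent messages $M_1,\dots,M_N$, $M_j$ uniform on $[1:2^{nR_j}]$ ($n$ the block length). Sender $k$ knows the messages $M_i$, $i\in\mathcal S_k$, and sends an index $L_k=f_k((M_i)_{i\in\mathcal S_k})\in[1:2^{nC_k})=\{1,\dots,2^{\lfloor nC_k\rfloor}\}$ over a noiseless broadcast link reaching all receivers. Receiver $j$ knows $M_i$, $i\in\mathcal A_j$, and must output an estimate $\hat M_j=g_j(L_1,\dots,L_K,(M_i)_{i\in\mathcal A_j})$ of $M_j$. A rate tuple is achievable if there exist such codes with $\Pr[(\hat M_1,\dots,\hat M_N)\ne(M_1,\dots,M_N)]\to0$ as $n\to\infty$; the capacity region $\mathcal C$ is the closure of the set of achievable rate tuples. *)

(* Defs.v *)
From Stdlib Require Import Reals List Arith ZArith.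
Import ListNotations.
Open Scope R_scope.

(* A message tuple is a list of
   naturals of length N; message j is its (j-1)-th entry.  Message j takes
   values in {0,...,2^floor(n R_j) - 1} (a relabelling of [1:2^{nR_j}]),
   sender k's index L_k takes values in {0,...,2^floor(n C_k) - 1}. *)

Definition msg (j : nat) (m : list nat) : nat := nth (pred j) m 0%nat.

Definition pow2floor (x : R) : nat := (2 ^ Z.to_nat (Int_part x))%nat.

Definition msize (n : nat) (Rt : nat -> R) (j : nat) : nat :=
  pow2floor (INR n * Rt j).

Definition valid_msgs (N n : nat) (Rt : nat -> R) (m : list nat) : Prop :=
  length m = N /\ forall j, (1 <= j <= N)%nat -> (msg j m < msize n Rt j)%nat.

Definition agree_on (I : list nat) (m m' : list nat) : Prop :=
  forall i, In i I -> msg i m = msg i m'.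

Record code (N K : nat) (S A : nat -> list nat) (C : nat -> R)
            (Rt : nat -> R) (n : nat) : Type := {
  enc : nat -> list nat -> nat;
  dec : nat -> list nat -> list nat -> nat; (* dec j (L_1..L_K) m = hat M_j *)
  enc_dep : forall k m m', (1 <= k <= K)%nat ->
      valid_msgs N n Rt m -> valid_msgs N n Rt m' ->
      agree_on (S k) m m' -> enc k m = enc k m';
  enc_range : forall k m, (1 <= k <= K)%nat -> valid_msgs N n Rt m ->
      (enc k m < pow2floor (INR n * C k))%nat;
  dec_dep : forall j l m m', (1 <= j <= N)%nat ->
      valid_msgs N n Rt m -> valid_msgs N n Rt m' ->
      agree_on (A j) m m' -> dec j l m = dec j l m'
}.

Arguments enc {N K S A C Rt n}.
Arguments dec {N K S A C Rt n}.

Definition sent {N K S A C Rt n} (c : code N K S A C Rt n) (m : list nat)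
  : list nat := map (fun k => enc c k m) (seq 1 K).

Definition err_event {N K S A C Rt n} (c : code N K S A C Rt n)
  (m : list nat) : bool :=
  existsb (fun j => negb (Nat.eqb (dec c j (sent c m) m) (msg j m))) (seq 1 N).

Fixpoint count_tuples (sizes : list nat) (P : list nat -> bool) : nat :=
  match sizes with
  | [] => if P [] then 1%nat else 0%nat
  | s :: ss =>
      fold_right Nat.add 0%nat
        (map (fun x => count_tuples ss (fun l => P (x :: l))) (seq 0 s))
  end.

Definition err_prob {N K S A C Rt n} (c : code N K S A C Rt n) : R :=
  let sizes := map (msize n Rt) (seq 1 N) in
  INR (count_tuples sizes (err_event c)) /
  INR (count_tuples sizes (fun _ => true)).

Definition achievable (N K : nat) (S A : nat -> list nat) (C : nat -> R)
  (Rt : nat -> R) : Prop :=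
  (forall j, (1 <= j <= N)%nat -> 0 <= Rt j) /\
  exists cs : forall n, code N K S A C Rt n,
    Un_cv (fun n => err_prob (cs n)) 0.

Definition capacity_region (N K : nat) (S A : nat -> list nat) (C : nat -> R)
  (Rt : nat -> R) : Prop :=
  forall eps, 0 < eps -> exists Rt', achievable N K S A C Rt' /\
    forall j, (1 <= j <= N)%nat -> Rabs (Rt j - Rt' j) < eps.

Definition S_ex (k : nat) : list nat :=
  match k with
  | 1%nat => [1; 2; 3]%nat
  | 2%nat => [2; 3; 4]%nat
  | 3%nat => [1; 2; 4; 5]%nat
  | _ => []
  end.

Definition A_ex (j : nat) : list nat :=
  match j with
  | 1%nat => [4; 5]%nat
  | 2%nat => [1; 3; 5]%nat
  | 3%nat => [1; 2]%nat
  | 4%nat => [2; 3; 5]%nat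
  | 5%nat => [3]%nat
  | _ => []
  end.

Definition C_ex (k : nat) : R := 1.

(* Main.v *)
Require Import Defs.
From Stdlib Require Import Reals List Arith ZArith Lia Lra Bool.
Import ListNotations.
Open Scope nat_scope.

Fixpoint packw (ws : list nat) (f : nat -> nat) : nat :=
  match ws with
  | [] => 0
  | w :: ws' => f 0 + 2 ^ w * packw ws' (fun s => f (S s))
  end.

Fixpoint unp (ws : list nat) (L : nat) (s : nat) : nat :=
  match ws, s with
  | [], _ => 0
  | w :: _, 0 => L mod 2 ^ w
  | w :: ws', S s' => unp ws' (L / 2 ^ w) s'
  end.

Definition sumn (l : list nat) := fold_right Nat.add 0 l.

Lemma packw_ext : forall ws f g, (forall s, s < length ws -> f s = g s) -> packw ws f = packw ws g.
Proof.
  induction ws as [|w ws IH]; intros f g H; simpl; auto.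
  rewrite (H 0) by (simpl; lia). f_equal. f_equal. apply IH. intros s Hs. apply H. simpl; lia.
Qed.

Lemma packw_lt : forall ws f, (forall s, s < length ws -> f s < 2 ^ nth s ws 0) ->
  packw ws f < 2 ^ sumn ws.
Proof.
  induction ws as [|w ws IH]; intros f H; simpl; [lia|].
  assert (H0 := H 0 ltac:(simpl; lia)). simpl in H0.
  assert (H1 := IH (fun s => f (S s)) (fun s Hs => H (S s) ltac:(simpl; lia))).
  rewrite Nat.pow_add_r.
  assert (f 0 + 2 ^ w * packw ws (fun s => f (S s)) <= 2^w - 1 + 2^w * (2 ^ sumn ws - 1)).
  { apply Nat.add_le_mono; [lia|]. apply Nat.mul_le_mono_l. lia. }
  assert (0 < 2 ^ w) by (apply Nat.neq_0_lt_0, Nat.pow_nonzero; lia).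
  assert (0 < 2 ^ sumn ws) by (apply Nat.neq_0_lt_0, Nat.pow_nonzero; lia).
  nia.
Qed.

Lemma unp_packw : forall ws f, (forall s, s < length ws -> f s < 2 ^ nth s ws 0) ->
  forall s, s < length ws -> unp ws (packw ws f) s = f s.
Proof.
  induction ws as [|w ws IH]; intros f H s Hs; simpl in Hs; [lia|].
  assert (Hp : 0 < 2 ^ w) by (apply Nat.neq_0_lt_0, Nat.pow_nonzero; lia).
  assert (H0 := H 0 ltac:(simpl; lia)). simpl in H0.
  destruct s as [|s]; simpl.
  - rewrite Nat.mul_comm, Nat.Div0.mod_add. apply Nat.mod_small; auto.
  - rewrite Nat.mul_comm, Nat.div_add by lia. rewrite Nat.div_small by auto. simpl.
    apply (IH (fun s => f (S s))); [|lia]. intros s' Hs'. apply (H (S s')). simpl; lia.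
Qed.

Lemma packw_unp : forall ws L, L < 2 ^ sumn ws -> packw ws (unp ws L) = L.
Proof.
  induction ws as [|w ws IH]; intros L HL; simpl in *.
  - lia.
  - assert (Hp : 0 < 2 ^ w) by (apply Nat.neq_0_lt_0, Nat.pow_nonzero; lia).
    rewrite Nat.pow_add_r in HL.
    change (packw ws (fun s => unp (w :: ws) L (S s))) with (packw ws (unp ws (L / 2 ^ w))).
    rewrite IH.
    + pose proof (Nat.div_mod_eq L (2 ^ w)). lia.
    + apply Nat.Div0.div_lt_upper_bound. lia.
Qed.

Lemma unp_lt : forall ws L s, s < length ws -> unp ws L s < 2 ^ nth s ws 0.
Proof.
  induction ws as [|w ws IH]; intros L s Hs; simpl in *; [lia|].
  destruct s as [|s].
  - apply Nat.mod_upper_bound. apply Nat.pow_nonzero; lia.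
  - apply IH; lia.
Qed.

Definition xorl (l : list nat) : nat := fold_right Nat.lxor 0 l.

Lemma lxor_lt : forall a b w, a < 2 ^ w -> b < 2 ^ w -> Nat.lxor a b < 2 ^ w.
Proof.
  intros a b w Ha Hb.
  destruct (Nat.eq_dec (Nat.lxor a b) 0) as [E|E]; [rewrite E; lia|].
  apply Nat.log2_lt_pow2; [lia|].
  assert (Hl := Nat.log2_lxor a b).
  destruct (Nat.eq_dec a 0) as [Ea|Ea]; destruct (Nat.eq_dec b 0) as [Eb|Eb].
  - subst. rewrite Nat.lxor_0_l in E. lia.
  - subst. rewrite Nat.lxor_0_l. apply Nat.log2_lt_pow2 in Hb; lia.
  - subst. rewrite Nat.lxor_0_r. apply Nat.log2_lt_pow2 in Ha; lia.
  - apply Nat.log2_lt_pow2 in Ha; [|lia]. apply Nat.log2_lt_pow2 in Hb; [|lia]. lia.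
Qed.

Lemma xorl_lt : forall l w, (forall x, In x l -> x < 2 ^ w) -> xorl l < 2 ^ w.
Proof.
  induction l as [|a l IH]; intros w H; simpl.
  - apply Nat.neq_0_lt_0, Nat.pow_nonzero; lia.
  - apply lxor_lt; [apply H; simpl; auto| apply IH; intros; apply H; simpl; auto].
Qed.

Lemma xorl_app : forall l1 l2, xorl (l1 ++ l2) = Nat.lxor (xorl l1) (xorl l2).
Proof.
  induction l1 as [|a l1 IH]; intros l2; simpl.
  - rewrite Nat.lxor_0_l. auto.
  - rewrite IH, Nat.lxor_assoc. auto.
Qed.

Lemma xorl_map_flat {A B} (f : A -> nat) (g : B -> nat) (h : A -> list B) (l : list A) :
  (forall a, In a l -> f a = xorl (map g (h a))) ->
  xorl (map f l) = xorl (map g (flat_map h l)).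
Proof.
  induction l as [|a l IH]; intros H; simpl; auto.
  rewrite map_app, xorl_app, <- IH by (intros; apply H; simpl; auto).
  rewrite H by (simpl; auto). auto.
Qed.

Definition pdec : forall x y : nat * nat, {x = y} + {x <> y}.
Proof. decide equality; apply Nat.eq_dec. Defined.

Lemma xorl_map_lxor {A} (U : list A) (g h : A -> nat) :
  xorl (map (fun r => Nat.lxor (g r) (h r)) U) = Nat.lxor (xorl (map g U)) (xorl (map h U)).
Proof.
  induction U as [|a U IH]; simpl; auto.
  rewrite IH. rewrite !Nat.lxor_assoc. f_equal.
  rewrite <- !Nat.lxor_assoc. f_equal. apply Nat.lxor_comm.
Qed.

Lemma xorl_notin (U : list (nat*nat)) (a : nat*nat) (v : nat) :
  ~ In a U -> xorl (map (fun r => if pdec r a then v else 0) U) = 0.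
Proof.
  induction U as [|c U IH]; intros Hn; simpl; auto.
  destruct (pdec c a) as [E|E]; [exfalso; apply Hn; left; auto|].
  rewrite IH; [reflexivity|]. intros H; apply Hn; right; auto.
Qed.

Lemma xorl_single (U : list (nat*nat)) (a : nat*nat) (v : nat) :
  NoDup U -> In a U -> xorl (map (fun r => if pdec r a then v else 0) U) = v.
Proof.
  induction U as [|b U IH]; intros Hn Hin; simpl in *; [tauto|].
  inversion Hn; subst.
  destruct (pdec b a) as [E|E].
  - subst. rewrite xorl_notin by auto. apply Nat.lxor_0_r.
  - destruct Hin as [Hin|Hin]; [congruence|]. rewrite IH; auto. apply Nat.lxor_0_l.
Qed.

Lemma xorl_zero {A} (U : list A) : xorl (map (fun _ => 0) U) = 0.
Proof. induction U; simpl; auto. rewrite IHU. reflexivity. Qed.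

Lemma xorl_parity (U : list (nat*nat)) (f : nat*nat -> nat) : NoDup U ->
  forall E, incl E U ->
  xorl (map f E) = xorl (map (fun r => if Nat.odd (count_occ pdec E r) then f r else 0) U).
Proof.
  intros Hn E. induction E as [|a E IH]; intros Hi.
  - simpl. rewrite xorl_zero. auto.
  - simpl. rewrite IH by (intros x Hx; apply Hi; simpl; auto).
    assert (Ha : In a U) by (apply Hi; simpl; auto).
    rewrite <- (xorl_single U a (f a)) at 1 by auto.
    rewrite Nat.lxor_comm, <- xorl_map_lxor. f_equal. apply map_ext. intros r.
    destruct (pdec a r) as [E1|E1]; destruct (pdec r a) as [E2|E2]; try congruence.
    + subst. rewrite Nat.odd_succ, <- Nat.negb_odd.
      destruct (Nat.odd (count_occ pdec E r)); simpl; rewrite ?Nat.lxor_nilpotent, ?Nat.lxor_0_l; auto.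
    + rewrite Nat.lxor_0_r. auto.
Qed.

Definition ctypes (j : nat) : list nat :=
  match j with
  | 1 => [2; 3; 4; 5; 6; 6; 7; 7; 7; 8; 8; 8]
  | 2 => [0; 0; 1; 1; 1; 2; 3; 4; 5; 5; 6; 7; 7; 8; 8; 8]
  | 3 => [0; 0; 1; 1; 2; 3; 4; 4; 5; 5; 6; 7; 7; 7; 8; 8; 8]
  | 4 => [2; 3; 3; 5; 6; 7; 7; 8; 8; 8]
  | 5 => [0; 2; 4; 7]
  | _ => [] end.

Definition stypes (k : nat) : list nat :=
  match k with
  | 1 => [0; 1; 2; 3; 4; 5; 6; 7; 7; 8; 8]
  | 2 => [0; 1; 2; 3; 4; 5; 6; 7; 7; 8; 8]
  | 3 => [0; 1; 2; 3; 4; 5; 6; 7; 7; 8; 8]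
  | _ => [] end.

Definition encR (k : nat) : list (list (nat*nat)) :=
  match k with
  | 1 => [[(2,0); (3,0)]; [(2,3); (3,2)]; [(1,0); (2,5); (3,4)]; [(1,1); (2,6); (3,5)]; [(1,2); (3,7)]; [(1,3); (2,9); (3,8)]; [(1,5)]; [(1,6); (1,7); (2,11); (3,12)]; [(1,7); (2,11); (3,11)]; [(1,10); (2,14); (3,14); (3,16)]; [(1,9); (2,15); (3,15)]]
  | 2 => [[(2,1); (3,1)]; [(2,2); (3,3)]; [(2,5); (3,4); (4,0)]; [(4,2)]; [(2,7); (3,6)]; [(2,8); (3,9)]; [(2,10); (3,10); (4,4)]; [(2,11); (2,12); (3,13); (4,5)]; [(2,11); (3,11); (4,6)]; [(2,13); (2,14); (2,15); (3,15); (3,16); (4,7); (4,8)]; [(2,14); (2,15); (3,14); (3,15); (3,16); (4,7)]]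
  | 3 => [[(5,0)]; [(2,4)]; [(5,1)]; [(1,1); (4,1)]; [(1,2); (5,2)]; [(1,3); (4,3)]; [(1,4); (4,4)]; [(1,6); (1,8); (4,5)]; [(1,6); (5,3)]; [(1,9); (4,9)]; [(1,11); (4,8)]]
  | _ => [] end.

Definition decR (j : nat) : list (list ((nat*nat)+(nat*nat))) :=
  match j with
  | 1 => [[inl (1,2); inl (2,2); inr (4,0)]; [inl (3,3); inr (4,1)]; [inl (3,4); inr (5,2)]; [inl (3,5); inr (4,3)]; [inl (3,6); inr (4,4)]; [inl (1,6)]; [inl (3,8); inr (5,3)]; [inl (1,8); inl (2,8); inr (4,6)]; [inl (3,7); inl (3,8); inr (4,5); inr (5,3)]; [inl (3,9); inr (4,9)]; [inl (1,9); inl (1,10); inl (2,10); inl (3,9); inr (4,7); inr (4,9)]; [inl (3,10); inr (4,8)]]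
  | 2 => [[inl (1,0); inr (3,0)]; [inl (2,0); inr (3,1)]; [inl (2,1); inr (3,3)]; [inl (1,1); inr (3,2)]; [inl (3,1)]; [inl (1,2); inr (1,0); inr (3,4)]; [inl (1,3); inr (1,1); inr (3,5)]; [inl (2,4); inr (3,6)]; [inl (2,5); inr (3,9)]; [inl (1,5); inr (1,3); inr (3,8)]; [inl (2,6); inl (3,6); inr (1,4); inr (3,10)]; [inl (1,8); inr (1,7); inr (3,11)]; [inl (1,8); inl (2,7); inl (3,7); inr (1,6); inr (1,7); inr (1,8); inr (3,11); inr (3,13)]; [inl (2,9); inl (2,10); inl (3,10); inr (1,11); inr (3,14)]; [inl (1,9); inr (1,10); inr (3,14); inr (3,16)]; [inl (1,10); inr (1,9); inr (3,15)]]
  | 3 => [[inl (1,0); inr (2,0)]; [inl (2,0); inr (2,1)]; [inl (1,1); inr (2,3)]; [inl (2,1); inr (2,2)]; [inl (1,2); inr (1,0); inr (2,5)]; [inl (1,3); inr (1,1); inr (2,6)]; [inl (2,4); inr (2,7)]; [inl (1,4); inr (1,2)]; [inl (1,5); inr (1,3); inr (2,9)]; [inl (2,5); inr (2,8)]; [inl (2,6); inl (3,6); inr (1,4); inr (2,10)]; [inl (1,8); inr (1,7); inr (2,11)]; [inl (1,7); inr (1,6); inr (1,7); inr (2,11)]; [inl (2,7); inl (3,7); inr (1,6); inr (1,8); inr (2,11); inr (2,12)]; [inl (2,9); inl (2,10); inl (3,10); inr (1,11); inr (2,13)]; [inl (1,10); inr (1,9); inr (2,15)]; [inl (1,9); inl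 (2,9); inl (2,10); inl (3,10); inr (1,10); inr (1,11); inr (2,13); inr (2,14)]]
  | 4 => [[inl (2,2); inr (2,5); inr (3,4)]; [inl (1,3); inl (3,3); inr (2,6); inr (3,5)]; [inl (2,3)]; [inl (1,5); inl (3,5); inr (2,9); inr (3,8)]; [inl (2,6); inr (2,10); inr (3,10)]; [inl (2,7); inr (2,11); inr (2,12); inr (3,13)]; [inl (2,8); inr (2,11); inr (3,11)]; [inl (2,10); inr (2,14); inr (2,15); inr (3,14); inr (3,15); inr (3,16)]; [inl (2,9); inl (2,10); inr (2,13); inr (3,14)]; [inl (1,10); inl (3,9); inr (2,15); inr (3,15)]]
  | 5 => [[inl (3,0)]; [inl (3,2)]; [inl (1,4); inl (3,4); inr (3,7)]; [inl (1,7); inl (1,8); inl (3,8); inr (3,11); inr (3,12)]]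
  | _ => [] end.

Definition Uall : list (nat*nat) :=
  flat_map (fun j => map (fun i => (j, i)) (seq 0 (length (ctypes j)))) [1;2;3;4;5].

Definition expand1 (it : (nat*nat)+(nat*nat)) : list (nat*nat) :=
  match it with inl (k, s) => nth s (encR k) [] | inr r => [r] end.

Definition memb (x : nat) (l : list nat) : bool := existsb (Nat.eqb x) l.
Definition pmemb (x : nat*nat) (l : list (nat*nat)) : bool :=
  existsb (fun y => if pdec x y then true else false) l.

Definition check_enc : bool :=
  forallb (fun k => forallb (fun s => forallb (fun r =>
     memb (fst r) (S_ex k) && (snd r <? length (ctypes (fst r))) &&
     (nth (snd r) (ctypes (fst r)) 0 =? nth s (stypes k) 0))
     (nth s (encR k) [])) (seq 0 (length (encR k)))) [1;2;3]
  && forallb (fun k => length (encR k) =? length (stypes k)) [1;2;3].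

Definition check_dec : bool :=
  forallb (fun j => forallb (fun i => forallb (fun it =>
     match it with
     | inl (k, s) => (1 <=? k) && (k <=? 3) && (s <? length (stypes k))
     | inr (j', i') => memb j' (A_ex j)
     end) (nth i (decR j) [])) (seq 0 (length (decR j)))) [1;2;3;4;5].

Definition check_par : bool :=
  forallb (fun j => forallb (fun i =>
     let E := flat_map expand1 (nth i (decR j) []) in
     forallb (fun r => pmemb r Uall) E &&
     forallb (fun r => Bool.eqb (Nat.odd (count_occ pdec E r)) (if pdec r (j, i) then true else false)) Uall)
     (seq 0 (length (ctypes j)))) [1;2;3;4;5].

Fixpoint nodupb (l : list (nat*nat)) : bool :=
  match l with [] => true | x :: l' => negb (pmemb x l') && nodupb l' end.

Lemma checks_ok : check_enc = true /\ check_dec = true /\ check_par = true /\ nodupb Uall = true.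
Proof. vm_compute. auto. Qed.

Lemma memb_In x l : memb x l = true <-> In x l.
Proof.
  unfold memb. rewrite existsb_exists. split.
  - intros [y [Hy E]]. apply Nat.eqb_eq in E. subst. auto.
  - intros H. exists x. split; auto. apply Nat.eqb_refl.
Qed.

Lemma pmemb_In x l : pmemb x l = true <-> In x l.
Proof.
  unfold pmemb. rewrite existsb_exists. split.
  - intros [y [Hy E]]. destruct (pdec x y); [subst; auto| discriminate].
  - intros H. exists x. split; auto. destruct (pdec x x); congruence.
Qed.

Lemma nodupb_NoDup l : nodupb l = true -> NoDup l.
Proof.
  induction l as [|x l IH]; simpl; intros H; constructor.
  - apply andb_true_iff in H. destruct H as [H _]. intros Hin. apply pmemb_In in Hin. rewrite Hin in H. discriminate.
  - apply andb_true_iff in H. apply IH. tauto.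
Qed.

Lemma nth_In_len {A} (l : list (list A)) s x : In x (nth s l []) -> s < length l.
Proof.
  intros H. destruct (Nat.lt_ge_cases s (length l)) as [Hl|Hl]; auto.
  rewrite nth_overflow in H by auto. destruct H.
Qed.

Lemma enc_ok : forall k, In k [1;2;3] -> forall s r, In r (nth s (encR k) []) ->
  In (fst r) (S_ex k) /\ snd r < length (ctypes (fst r)) /\
  nth (snd r) (ctypes (fst r)) 0 = nth s (stypes k) 0.
Proof.
  intros k Hk s r Hr.
  destruct checks_ok as [H _]. unfold check_enc in H. apply andb_true_iff in H. destruct H as [H _].
  rewrite forallb_forall in H. specialize (H k Hk). rewrite forallb_forall in H.
  specialize (H s ltac:(apply in_seq; split; [lia| simpl; eapply nth_In_len; eauto])).
  rewrite forallb_forall in H. specialize (H r Hr).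
  apply andb_true_iff in H as [H H3]. apply andb_true_iff in H as [H1 H2].
  apply memb_In in H1. apply Nat.ltb_lt in H2. apply Nat.eqb_eq in H3. auto.
Qed.

Lemma enc_len : forall k, In k [1;2;3] -> length (encR k) = length (stypes k).
Proof.
  intros k Hk. destruct checks_ok as [H _]. unfold check_enc in H. apply andb_true_iff in H. destruct H as [_ H].
  rewrite forallb_forall in H. apply Nat.eqb_eq. auto.
Qed.

Lemma dec_ok : forall j, In j [1;2;3;4;5] -> forall i it, In it (nth i (decR j) []) ->
  match it with
  | inl (k, s) => 1 <= k <= 3 /\ s < length (stypes k)
  | inr (j', i') => In j' (A_ex j)
  end.
Proof.
  intros j Hj i it Hit.
  destruct checks_ok as [_ [H _]]. unfold check_dec in H.
  rewrite forallb_forall in H. specialize (H j Hj). rewrite forallb_forall in H.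
  specialize (H i ltac:(apply in_seq; split; [lia| simpl; eapply nth_In_len; eauto])).
  rewrite forallb_forall in H. specialize (H it Hit).
  destruct it as [[k s]|[j' i']].
  - apply andb_true_iff in H as [H H3]. apply andb_true_iff in H as [H1 H2].
    apply Nat.leb_le in H1. apply Nat.leb_le in H2. apply Nat.ltb_lt in H3. auto.
  - apply memb_In; auto.
Qed.

Lemma par_ok : forall j, In j [1;2;3;4;5] -> forall i, i < length (ctypes j) ->
  incl (flat_map expand1 (nth i (decR j) [])) Uall /\
  forall r, In r Uall -> Nat.odd (count_occ pdec (flat_map expand1 (nth i (decR j) [])) r) =
     (if pdec r (j, i) then true else false).
Proof.
  intros j Hj i Hi.
  destruct checks_ok as [_ [_ [H _]]]. unfold check_par in H.
  rewrite forallb_forall in H. specialize (H j Hj). rewrite forallb_forall in H.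
  specialize (H i ltac:(apply in_seq; split; [lia| simpl; lia])).
  apply andb_true_iff in H as [H1 H2]. split.
  - intros r Hr. rewrite forallb_forall in H1. apply pmemb_In. auto.
  - intros r Hr. rewrite forallb_forall in H2. apply Bool.eqb_prop. auto.
Qed.

Lemma Uall_NoDup : NoDup Uall.
Proof. apply nodupb_NoDup. apply checks_ok. Qed.

Lemma Uall_In : forall j i, In j [1;2;3;4;5] -> i < length (ctypes j) -> In (j, i) Uall.
Proof.
  intros j i Hj Hi. unfold Uall. apply in_flat_map. exists j. split; auto.
  apply in_map. apply in_seq. lia.
Qed.

Lemma in15 : forall j, (1 <= j <= 5)%nat -> In j [1;2;3;4;5].
Proof. intros j Hj. destruct j as [|[|[|[|[|[|j]]]]]]; simpl; try lia; tauto. Qed.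
Lemma in13 : forall k, (1 <= k <= 3)%nat -> In k [1;2;3].
Proof. intros k Hk. destruct k as [|[|[|[|k]]]]; simpl; try lia; tauto. Qed.

Section Sem.
Variable w : nat -> nat.

Definition cw j := map w (ctypes j).
Definition sw k := map w (stypes k).
Definition chunks (m : list nat) j i := unp (cw j) (msg j m) i.
Definition slotv (x : nat -> nat -> nat) k s := xorl (map (fun r => x (fst r) (snd r)) (nth s (encR k) [])).
Definition encode k m := packw (sw k) (slotv (chunks m) k).
Definition itemv (y x : nat -> nat -> nat) (it : (nat*nat)+(nat*nat)) : nat :=
  match it with inl r => y (fst r) (snd r) | inr r => x (fst r) (snd r) end.
Definition decode j (l : list nat) m :=
  packw (cw j) (fun i => xorl (map (itemv (fun k s => unp (sw k) (nth (pred k) l 0) s) (chunks m)) (nth i (decR j) []))).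
Definition sentL m := map (fun k => encode k m) (seq 1 3).

Lemma nth_map_w l s : s < length l -> nth s (map w l) 0 = w (nth s l 0).
Proof. intros Hs. rewrite (nth_indep _ 0 (w 0)) by (rewrite length_map; auto). apply map_nth. Qed.

Lemma chunks_lt m j i : i < length (ctypes j) -> chunks m j i < 2 ^ (w (nth i (ctypes j) 0)).
Proof.
  intros Hi. unfold chunks. rewrite <- nth_map_w by auto. apply unp_lt. unfold cw. rewrite length_map. auto.
Qed.

Lemma slot_lt m k s : In k [1;2;3] -> s < length (stypes k) -> slotv (chunks m) k s < 2 ^ nth s (sw k) 0.
Proof.
  intros Hk Hs. unfold sw. rewrite nth_map_w by auto. unfold slotv. apply xorl_lt.
  intros x Hx. apply in_map_iff in Hx. destruct Hx as [r [<- Hr]].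
  destruct (enc_ok k Hk s r Hr) as [_ [H2 H3]]. rewrite <- H3. apply chunks_lt. auto.
Qed.

Lemma decode_correct m j : In j [1;2;3;4;5] -> msg j m < 2 ^ sumn (cw j) ->
  decode j (sentL m) m = msg j m.
Proof.
  intros Hj Hm. unfold decode. rewrite <- (packw_unp (cw j) (msg j m)) by auto.
  apply packw_ext. intros i Hi. unfold cw in Hi. rewrite length_map in Hi.
  fold (chunks m j i).
  rewrite (xorl_map_flat _ (fun r => chunks m (fst r) (snd r)) expand1).
  - destruct (par_ok j Hj i Hi) as [Hinc Hpar].
    rewrite (xorl_parity Uall _ Uall_NoDup _ Hinc).
    erewrite map_ext_in.
    2:{ intros r Hr. rewrite (Hpar r Hr). reflexivity. }
    transitivity (xorl (map (fun r => if pdec r (j, i) then chunks m j i else 0) Uall)).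
    + f_equal. apply map_ext. intros r. destruct (pdec r (j, i)); subst; auto.
    + apply xorl_single; [apply Uall_NoDup| apply Uall_In; auto].
  - intros it Hit. pose proof (dec_ok j Hj i it Hit) as Hd.
    destruct it as [[k s]|[j' i']]; cbn [itemv fst snd expand1 map xorl fold_right].
    + destruct Hd as [Hk Hs].
      assert (Hn : nth (pred k) (sentL m) 0 = encode k m).
      { unfold sentL. destruct k as [|[|[|[|k]]]]; try lia; reflexivity. }
      rewrite Hn. unfold encode. rewrite unp_packw.
      * unfold slotv. auto.
      * intros s' Hs'. unfold sw in Hs'. rewrite length_map in Hs'. apply slot_lt; auto. apply in13; auto.
      * unfold sw. rewrite length_map. auto.
    + rewrite Nat.lxor_0_r. auto.
Qed.

Lemma encode_dep k m m' : In k [1;2;3] -> agree_on (S_ex k) m m' -> encode k m = encode k m'.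
Proof.
  intros Hk Ha. unfold encode. apply packw_ext. intros s Hs. unfold slotv. f_equal.
  apply map_ext_in. intros r Hr. destruct (enc_ok k Hk s r Hr) as [H1 _].
  unfold chunks. rewrite (Ha (fst r) H1). auto.
Qed.

Lemma decode_dep j l m m' : In j [1;2;3;4;5] -> agree_on (A_ex j) m m' -> decode j l m = decode j l m'.
Proof.
  intros Hj Ha. unfold decode. apply packw_ext. intros i Hi. f_equal.
  apply map_ext_in. intros it Hit. pose proof (dec_ok j Hj i it Hit) as Hd.
  destruct it as [[k s]|[j' i']]; simpl; auto.
  unfold chunks. rewrite (Ha j' Hd). auto.
Qed.

Lemma encode_lt k m : In k [1;2;3] -> encode k m < 2 ^ sumn (sw k).
Proof.
  intros Hk. unfold encode. apply packw_lt. intros s Hs. unfold sw in Hs. rewrite length_map in Hs.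
  apply slot_lt; auto.
Qed.
End Sem.

Open Scope R_scope.

Fixpoint tuples (sizes : list nat) : list (list nat) :=
  match sizes with
  | [] => [[]]
  | s :: ss => flat_map (fun x => map (cons x) (tuples ss)) (seq 0 s)
  end.

Lemma length_filter_flat_map {A B} (P : B -> bool) (f : A -> list B) (l : list A) :
  length (filter P (flat_map f l)) =
  fold_right Nat.add 0%nat (map (fun x => length (filter P (f x))) l).
Proof.
  induction l as [|a l IH]; simpl; auto.
  rewrite filter_app, length_app, IH; reflexivity.
Qed.

Lemma length_filter_map_cons (P : list nat -> bool) x (L : list (list nat)) :
  length (filter P (map (cons x) L)) = length (filter (fun l => P (x :: l)) L).
Proof.
  induction L as [|a L IH]; simpl; auto.
  destruct (P (x :: a)); simpl; auto.
Qed.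

Lemma count_tuples_eq : forall sizes P,
  count_tuples sizes P = length (filter P (tuples sizes)).
Proof.
  induction sizes as [|s ss IH]; intros P; simpl.
  - destruct (P []); reflexivity.
  - rewrite length_filter_flat_map. f_equal.
    apply map_ext. intros x. rewrite IH, length_filter_map_cons. reflexivity.
Qed.

Lemma In_tuples : forall sizes l, In l (tuples sizes) <-> Forall2 lt l sizes.
Proof.
  induction sizes as [|s ss IH]; intros l; simpl.
  - split.
    + intros [<-|[]]; constructor.
    + intros H; inversion H; auto.
  - rewrite in_flat_map. split.
    + intros [x [Hx Hl]]. apply in_seq in Hx. apply in_map_iff in Hl.
      destruct Hl as [t [<- Ht]]. constructor; [lia| apply IH; auto].
    + intros H; inversion H; subst. exists x. split.
      * apply in_seq; lia.
      * apply in_map. apply IH; auto.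
Qed.

Lemma NoDup_tuples : forall sizes, NoDup (tuples sizes).
Proof.
  induction sizes as [|s ss IH]; simpl.
  - constructor; [simpl; tauto| constructor].
  - generalize 0%nat. induction s as [|s IHs]; intros a; simpl; [constructor|].
    apply NoDup_app.
    + apply NoDup_map_inv with (f := @tl nat). rewrite map_map. simpl. rewrite map_id. auto.
    + apply IHs.
    + intros x Hx Hx'. apply in_map_iff in Hx. destruct Hx as [t [<- _]].
      apply in_flat_map in Hx'. destruct Hx' as [y [Hy Hm]]. apply in_seq in Hy.
      apply in_map_iff in Hm. destruct Hm as [t' [Ht' _]]. inversion Ht'. lia.
Qed.

Lemma length_tuples : forall sizes, length (tuples sizes) = fold_right Nat.mul 1%nat sizes.
Proof.
  induction sizes as [|s ss IH]; simpl; auto.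
  rewrite flat_map_concat_map, length_concat, map_map.
  erewrite map_ext; [|intros; rewrite length_map, IH; reflexivity].
  generalize (fold_right Nat.mul 1%nat ss). intros c. generalize 0%nat.
  induction s as [|s IHs]; intros a; simpl; auto.
Qed.

Lemma filter_length_compl {A} (f : A -> bool) (l : list A) :
  (length (filter f l) + length (filter (fun x => negb (f x)) l))%nat = length l.
Proof.
  induction l as [|a l IH]; simpl; auto.
  destruct (f a); simpl; lia.
Qed.

Lemma NoDup_map_inj {A B} (f : A -> B) (l : list A) :
  NoDup l -> (forall x y, In x l -> In y l -> f x = f y -> x = y) -> NoDup (map f l).
Proof.
  induction l as [|a l IH]; intros Hn Hi; simpl; constructor.
  - intros Hin. apply in_map_iff in Hin. destruct Hin as [x [Hx Hxl]].
    inversion Hn; subst. assert (x = a) by (apply Hi; simpl; auto). subst. contradiction.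
  - inversion Hn; subst. apply IH; auto. intros; apply Hi; simpl; auto.
Qed.

Lemma inj_count {A} (l : list A) (T : list (list nat)) (g : A -> bool) (phi : A -> list nat) :
  NoDup l ->
  (forall m, In m l -> g m = true -> In (phi m) T) ->
  (forall m m', In m l -> In m' l -> g m = true -> g m' = true -> phi m = phi m' -> m = m') ->
  NoDup T ->
  (length (filter g l) <= length T)%nat.
Proof.
  intros Hn Hr Hi HT.
  rewrite <- (length_map phi).
  apply NoDup_incl_length.
  - apply NoDup_map_inj. apply NoDup_filter; auto.
    intros x y Hx Hy. apply filter_In in Hx, Hy. apply Hi; tauto.
  - intros y Hy. apply in_map_iff in Hy. destruct Hy as [x [<- Hx]].
    apply filter_In in Hx. apply Hr; tauto.
Qed.

Definition szs (n : nat) (Rt : nat -> R) : list nat := map (msize n Rt) (seq 1 5).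

Lemma In_tuples5 : forall s1 s2 s3 s4 s5 m,
  In m (tuples [s1;s2;s3;s4;s5]) <->
  exists a b c d e, m = [a;b;c;d;e] /\ (a < s1 /\ b < s2 /\ c < s3 /\ d < s4 /\ e < s5)%nat.
Proof.
  intros. rewrite In_tuples. split.
  - intros H.
    destruct m as [|a [|b [|c [|d [|e [|f m]]]]]];
    repeat match goal with H: Forall2 _ _ _ |- _ => inversion H; subst; clear H end.
    exists a, b, c, d, e. repeat split; auto.
  - intros (a&b&c&d&e&->&?&?&?&?&?). repeat constructor; auto.
Qed.

Lemma valid_In : forall n Rt m, valid_msgs 5 n Rt m <-> In m (tuples (szs n Rt)).
Proof.
  intros n Rt m. change (szs n Rt) with [msize n Rt 1; msize n Rt 2; msize n Rt 3; msize n Rt 4; msize n Rt 5]. rewrite In_tuples5. unfold valid_msgs. split.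
  - intros [Hl Hv]. destruct m as [|a [|b [|c [|d [|e [|f m]]]]]]; simpl in Hl; try lia.
    exists a, b, c, d, e. split; auto.
    repeat split; [apply (Hv 1%nat)|apply (Hv 2%nat)|apply (Hv 3%nat)|apply (Hv 4%nat)|apply (Hv 5%nat)]; lia.
  - intros (a&b&c&d&e&->&Ha&Hb&Hc&Hd&He). split; auto.
    intros j Hj. destruct j as [|[|[|[|[|[|j]]]]]]; try lia; unfold msg; simpl; auto.
Qed.

Lemma err_false_dec {n Rt} (c : code 5 3 S_ex A_ex C_ex Rt n) m :
  err_event c m = false -> forall j, (1 <= j <= 5)%nat -> dec c j (sent c m) m = msg j m.
Proof.
  intros H j Hj. unfold err_event in H.
  destruct (Nat.eqb (dec c j (sent c m) m) (msg j m)) eqn:E.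
  - apply Nat.eqb_eq; auto.
  - exfalso. assert (existsb (fun j0 : nat => negb (dec c j0 (sent c m) m =? msg j0 m)%nat) (seq 1 5) = true).
    { apply existsb_exists. exists j. split; [apply in_seq; lia| rewrite E; reflexivity]. }
    congruence.
Qed.

Lemma pow2floor_n : forall n, pow2floor (INR n * C_ex 1) = (2 ^ n)%nat.
Proof.
  intros n. unfold pow2floor, C_ex. rewrite Rmult_1_r.
  f_equal. assert (Int_part (INR n) = Z.of_nat n).
  { unfold Int_part. rewrite INR_IZR_INZ. rewrite <- (up_tech (IZR (Z.of_nat n)) (Z.of_nat n)).
    - lia.
    - lra.
    - rewrite plus_IZR. simpl. lra. }
  rewrite H. apply Nat2Z.id.
Qed.

Lemma enc_lt {n Rt} (c : code 5 3 S_ex A_ex C_ex Rt n) k m :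
  (1 <= k <= 3)%nat -> valid_msgs 5 n Rt m -> (enc c k m < 2 ^ n)%nat.
Proof.
  intros Hk Hv. rewrite <- (pow2floor_n n). unfold C_ex at 2.
  replace (INR n * 1) with (INR n * C_ex k) by (unfold C_ex; reflexivity).
  apply enc_range; auto.
Qed.

Lemma prod_pos : forall l, Forall (fun x => 0 < x)%nat l -> (0 < fold_right Nat.mul 1 l)%nat.
Proof.
  induction l; simpl; intros H; auto. inversion H; subst. apply Nat.mul_pos_pos; auto.
Qed.

Lemma msize_pos : forall n Rt j, (0 < msize n Rt j)%nat.
Proof. intros. unfold msize, pow2floor. apply Nat.neq_0_lt_0. apply Nat.pow_nonzero. lia. Qed.

Lemma filter_true {A} (l : list A) : filter (fun _ => true) l = l.
Proof. induction l; simpl; congruence. Qed.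

Lemma conv_half {n Rt} (c : code 5 3 S_ex A_ex C_ex Rt n) (T : list nat) (phi : list nat -> list nat) :
  (forall m, valid_msgs 5 n Rt m -> err_event c m = false -> In (phi m) (tuples T)) ->
  (forall m m', valid_msgs 5 n Rt m -> valid_msgs 5 n Rt m' -> err_event c m = false ->
       err_event c m' = false -> phi m = phi m' -> m = m') ->
  (2 * fold_right Nat.mul 1 T <= fold_right Nat.mul 1 (szs n Rt))%nat ->
  err_prob c >= 1/2.
Proof.
  intros Hr Hi Hp.
  assert (Hb : (length (filter (fun m => negb (err_event c m)) (tuples (szs n Rt))) <= length (tuples T))%nat).
  { apply (inj_count _ _ _ phi); [apply NoDup_tuples | | | apply NoDup_tuples].
    - intros m Hm Hg. apply Hr; [apply valid_In; auto| destruct (err_event c m); auto; discriminate].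
    - intros m m' Hm Hm' Hg Hg' He. apply Hi; try apply valid_In; auto;
      [destruct (err_event c m)|destruct (err_event c m')]; auto; discriminate. }
  rewrite length_tuples in Hb.
  pose proof (filter_length_compl (err_event c) (tuples (szs n Rt))) as Hc.
  rewrite length_tuples in Hc.
  assert (Hpos : (0 < fold_right Nat.mul 1 (szs n Rt))%nat).
  { apply prod_pos. unfold szs. apply Forall_forall. intros x Hx. apply in_map_iff in Hx.
    destruct Hx as [j [<- _]]. apply msize_pos. }
  unfold err_prob. cbv zeta. fold (szs n Rt).
  rewrite !count_tuples_eq. rewrite filter_true.
  rewrite length_tuples.
  set (Np := fold_right Nat.mul 1%nat (szs n Rt)) in *.
  set (E := length (filter (err_event c) (tuples (szs n Rt)))) in *.
  assert (HE : (Np <= 2 * E)%nat) by lia.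
  assert (HN : 0 < INR Np) by (apply lt_0_INR; lia).
  apply le_INR in HE. rewrite mult_INR in HE. simpl in HE.
  apply Rle_ge. apply Rmult_le_reg_r with (INR Np); auto.
  field_simplify; [|lra]. apply Rmult_le_reg_r with 2; [lra|]. unfold Rdiv. rewrite Rmult_assoc, Rinv_l; lra.
Qed.

Lemma eq_of_msgs : forall n Rt m m', valid_msgs 5 n Rt m -> valid_msgs 5 n Rt m' ->
  msg 1 m = msg 1 m' -> msg 2 m = msg 2 m' -> msg 3 m = msg 3 m' ->
  msg 4 m = msg 4 m' -> msg 5 m = msg 5 m' -> m = m'.
Proof.
  intros n Rt m m' [Hl _] [Hl' _].
  destruct m as [|a [|b [|c [|d [|e [|f m]]]]]]; simpl in Hl; try lia.
  destruct m' as [|a' [|b' [|c' [|d' [|e' [|f' m']]]]]]; simpl in Hl'; try lia.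
  unfold msg; simpl. intros; subst; reflexivity.
Qed.

Ltac agree := let i := fresh "i" in let Hi := fresh "Hi" in
  intros i Hi; simpl in Hi;
  repeat (destruct Hi as [Hi|Hi]; [subst i; assumption|]); destruct Hi.

Ltac in_tuples_tac Hv c :=
  apply In_tuples; destruct Hv as [Hl Hvv];
  repeat (apply Forall2_cons; [first [ apply Hvv; lia | lia | apply (enc_lt c); [lia|split; auto] ] |]);
  apply Forall2_nil.

Ltac decode_step c Hg Hg' Hsent j :=
  rewrite <- (err_false_dec c _ Hg j), <- (err_false_dec c _ Hg' j) by lia;
  rewrite Hsent; apply (dec_dep _ _ _ _ _ _ _ c); [lia|assumption|assumption|agree].

Ltac sent_eq c :=
  unfold sent; simpl.

Section Conv.
Context {n : nat} {Rt : nat -> R} (c : code 5 3 S_ex A_ex C_ex Rt n).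
Let s j := msize n Rt j.

Lemma szs_eq : szs n Rt = [s 1; s 2; s 3; s 4; s 5]%nat.
Proof. reflexivity. Qed.

Lemma conv_3 : (2 * (2^n * 2^n) <= s 3)%nat -> err_prob c >= 1/2.
Proof.
  intros Hs.
  apply (conv_half c [s 1; s 2; 1; s 4; s 5; 2^n; 2^n]%nat
    (fun m => [msg 1 m; msg 2 m; 0; msg 4 m; msg 5 m; enc c 1 m; enc c 2 m]%nat)).
  - intros m Hv Hg. in_tuples_tac Hv c.
  - intros m m' Hv Hv' Hg Hg' He. injection He as E1 E2 E4 E5 L1 L2.
    assert (L3 : enc c 3 m = enc c 3 m') by (apply (enc_dep _ _ _ _ _ _ _ c); auto; agree).
    assert (Hsent : sent c m = sent c m') by (unfold sent; simpl; congruence).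
    assert (E3 : msg 3 m = msg 3 m') by decode_step c Hg Hg' Hsent 3%nat.
    apply (eq_of_msgs n Rt); auto.
  - rewrite szs_eq. simpl. pose proof (Nat.mul_le_mono_l _ _ (s 1 * s 2 * s 4 * s 5) Hs). nia.
Qed.

Lemma conv_5 : (2 * 2^n <= s 5)%nat -> err_prob c >= 1/2.
Proof.
  intros Hs.
  apply (conv_half c [s 1; s 2; s 3; s 4; 1; 2^n]%nat
    (fun m => [msg 1 m; msg 2 m; msg 3 m; msg 4 m; 0; enc c 3 m]%nat)).
  - intros m Hv Hg. in_tuples_tac Hv c.
  - intros m m' Hv Hv' Hg Hg' He. injection He as E1 E2 E3 E4 L3.
    assert (L1 : enc c 1 m = enc c 1 m') by (apply (enc_dep _ _ _ _ _ _ _ c); auto; agree).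
    assert (L2 : enc c 2 m = enc c 2 m') by (apply (enc_dep _ _ _ _ _ _ _ c); auto; agree).
    assert (Hsent : sent c m = sent c m') by (unfold sent; simpl; congruence).
    assert (E5 : msg 5 m = msg 5 m') by decode_step c Hg Hg' Hsent 5%nat.
    apply (eq_of_msgs n Rt); auto.
  - rewrite szs_eq. simpl. pose proof (Nat.mul_le_mono_l _ _ (s 1 * s 2 * s 3 * s 4) Hs). nia.
Qed.

Lemma conv_13 : (2 * (2^n * (2^n * 2^n)) <= s 1 * s 3)%nat -> err_prob c >= 1/2.
Proof.
  intros Hs.
  apply (conv_half c [1; s 2; 1; s 4; s 5; 2^n; 2^n; 2^n]%nat
    (fun m => [0; msg 2 m; 0; msg 4 m; msg 5 m; enc c 1 m; enc c 2 m; enc c 3 m]%nat)).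
  - intros m Hv Hg. in_tuples_tac Hv c.
  - intros m m' Hv Hv' Hg Hg' He. injection He as E2 E4 E5 L1 L2 L3.
    assert (Hsent : sent c m = sent c m') by (unfold sent; simpl; congruence).
    assert (E1 : msg 1 m = msg 1 m') by decode_step c Hg Hg' Hsent 1%nat.
    assert (E3 : msg 3 m = msg 3 m') by decode_step c Hg Hg' Hsent 3%nat.
    apply (eq_of_msgs n Rt); auto.
  - rewrite szs_eq. simpl. pose proof (Nat.mul_le_mono_l _ _ (s 2 * s 4 * s 5) Hs). nia.
Qed.

Lemma conv_15 : (2 * (2^n * 2^n) <= s 1 * s 5)%nat -> err_prob c >= 1/2.
Proof.
  intros Hs.
  apply (conv_half c [1; s 2; s 3; s 4; 1; 2^n; 2^n]%nat
    (fun m => [0; msg 2 m; msg 3 m; msg 4 m; 0; enc c 1 m; enc c 3 m]%nat)).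
  - intros m Hv Hg. in_tuples_tac Hv c.
  - intros m m' Hv Hv' Hg Hg' He. injection He as E2 E3 E4 L1 L3.
    assert (L2 : enc c 2 m = enc c 2 m') by (apply (enc_dep _ _ _ _ _ _ _ c); auto; agree).
    assert (Hsent : sent c m = sent c m') by (unfold sent; simpl; congruence).
    assert (E5 : msg 5 m = msg 5 m') by decode_step c Hg Hg' Hsent 5%nat.
    assert (E1 : msg 1 m = msg 1 m') by decode_step c Hg Hg' Hsent 1%nat.
    apply (eq_of_msgs n Rt); auto.
  - rewrite szs_eq. simpl. pose proof (Nat.mul_le_mono_l _ _ (s 2 * s 3 * s 4) Hs). nia.
Qed.

Lemma conv_45 : (2 * (2^n * 2^n) <= s 4 * s 5)%nat -> err_prob c >= 1/2.
Proof.
  intros Hs.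
  apply (conv_half c [s 1; s 2; s 3; 1; 1; 2^n; 2^n]%nat
    (fun m => [msg 1 m; msg 2 m; msg 3 m; 0; 0; enc c 2 m; enc c 3 m]%nat)).
  - intros m Hv Hg. in_tuples_tac Hv c.
  - intros m m' Hv Hv' Hg Hg' He. injection He as E1 E2 E3 L2 L3.
    assert (L1 : enc c 1 m = enc c 1 m') by (apply (enc_dep _ _ _ _ _ _ _ c); auto; agree).
    assert (Hsent : sent c m = sent c m') by (unfold sent; simpl; congruence).
    assert (E5 : msg 5 m = msg 5 m') by decode_step c Hg Hg' Hsent 5%nat.
    assert (E4 : msg 4 m = msg 4 m') by decode_step c Hg Hg' Hsent 4%nat.
    apply (eq_of_msgs n Rt); auto.
  - rewrite szs_eq. simpl. pose proof (Nat.mul_le_mono_l _ _ (s 1 * s 2 * s 3) Hs). nia.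
Qed.

Lemma conv_125 : (2 * (2^n * (2^n * 2^n)) <= s 1 * s 2 * s 5)%nat -> err_prob c >= 1/2.
Proof.
  intros Hs.
  apply (conv_half c [1; 1; s 3; s 4; 1; 2^n; 2^n; 2^n]%nat
    (fun m => [0; 0; msg 3 m; msg 4 m; 0; enc c 1 m; enc c 2 m; enc c 3 m]%nat)).
  - intros m Hv Hg. in_tuples_tac Hv c.
  - intros m m' Hv Hv' Hg Hg' He. injection He as E3 E4 L1 L2 L3.
    assert (Hsent : sent c m = sent c m') by (unfold sent; simpl; congruence).
    assert (E5 : msg 5 m = msg 5 m') by decode_step c Hg Hg' Hsent 5%nat.
    assert (E1 : msg 1 m = msg 1 m') by decode_step c Hg Hg' Hsent 1%nat.
    assert (E2 : msg 2 m = msg 2 m') by decode_step c Hg Hg' Hsent 2%nat.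
    apply (eq_of_msgs n Rt); auto.
  - rewrite szs_eq. simpl. pose proof (Nat.mul_le_mono_l _ _ (s 3 * s 4) Hs). nia.
Qed.

Lemma conv_145 : (2 * (2^n * (2^n * 2^n)) <= s 1 * s 4 * s 5)%nat -> err_prob c >= 1/2.
Proof.
  intros Hs.
  apply (conv_half c [1; s 2; s 3; 1; 1; 2^n; 2^n; 2^n]%nat
    (fun m => [0; msg 2 m; msg 3 m; 0; 0; enc c 1 m; enc c 2 m; enc c 3 m]%nat)).
  - intros m Hv Hg. in_tuples_tac Hv c.
  - intros m m' Hv Hv' Hg Hg' He. injection He as E2 E3 L1 L2 L3.
    assert (Hsent : sent c m = sent c m') by (unfold sent; simpl; congruence).
    assert (E5 : msg 5 m = msg 5 m') by decode_step c Hg Hg' Hsent 5%nat.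
    assert (E4 : msg 4 m = msg 4 m') by decode_step c Hg Hg' Hsent 4%nat.
    assert (E1 : msg 1 m = msg 1 m') by decode_step c Hg Hg' Hsent 1%nat.
    apply (eq_of_msgs n Rt); auto.
  - rewrite szs_eq. simpl. pose proof (Nat.mul_le_mono_l _ _ (s 2 * s 3) Hs). nia.
Qed.

Lemma conv_245 : (2 * (2^n * (2^n * 2^n)) <= s 2 * s 4 * s 5)%nat -> err_prob c >= 1/2.
Proof.
  intros Hs.
  apply (conv_half c [s 1; 1; s 3; 1; 1; 2^n; 2^n; 2^n]%nat
    (fun m => [msg 1 m; 0; msg 3 m; 0; 0; enc c 1 m; enc c 2 m; enc c 3 m]%nat)).
  - intros m Hv Hg. in_tuples_tac Hv c.
  - intros m m' Hv Hv' Hg Hg' He. injection He as E1 E3 L1 L2 L3.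
    assert (Hsent : sent c m = sent c m') by (unfold sent; simpl; congruence).
    assert (E5 : msg 5 m = msg 5 m') by decode_step c Hg Hg' Hsent 5%nat.
    assert (E2 : msg 2 m = msg 2 m') by decode_step c Hg Hg' Hsent 2%nat.
    assert (E4 : msg 4 m = msg 4 m') by decode_step c Hg Hg' Hsent 4%nat.
    apply (eq_of_msgs n Rt); auto.
  - rewrite szs_eq. simpl. pose proof (Nat.mul_le_mono_l _ _ (s 1 * s 3) Hs). nia.
Qed.

Lemma conv_345 : (2 * (2^n * (2^n * 2^n)) <= s 3 * s 4 * s 5)%nat -> err_prob c >= 1/2.
Proof.
  intros Hs.
  apply (conv_half c [s 1; s 2; 1; 1; 1; 2^n; 2^n; 2^n]%nat
    (fun m => [msg 1 m; msg 2 m; 0; 0; 0; enc c 1 m; enc c 2 m; enc c 3 m]%nat)).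
  - intros m Hv Hg. in_tuples_tac Hv c.
  - intros m m' Hv Hv' Hg Hg' He. injection He as E1 E2 L1 L2 L3.
    assert (Hsent : sent c m = sent c m') by (unfold sent; simpl; congruence).
    assert (E3 : msg 3 m = msg 3 m') by decode_step c Hg Hg' Hsent 3%nat.
    assert (E5 : msg 5 m = msg 5 m') by decode_step c Hg Hg' Hsent 5%nat.
    assert (E4 : msg 4 m = msg 4 m') by decode_step c Hg Hg' Hsent 4%nat.
    apply (eq_of_msgs n Rt); auto.
  - rewrite szs_eq. simpl. pose proof (Nat.mul_le_mono_l _ _ (s 1 * s 2) Hs). nia.
Qed.
End Conv.

Definition ex (x : R) : nat := Z.to_nat (Int_part x).

Lemma ex_bounds : forall x, 0 <= x -> x - 1 < INR (ex x) <= x.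
Proof.
  intros x Hx. unfold ex. destruct (base_Int_part x) as [H1 H2].
  assert (Hz : (0 <= Int_part x)%Z).
  { destruct (Z_lt_le_dec (Int_part x) 0) as [Hl|Hl]; auto.
    exfalso. assert (Int_part x <= -1)%Z by lia. apply IZR_le in H. lra. }
  rewrite INR_IZR_INZ, Z2Nat.id by auto. lra.
Qed.

Lemma msize_ex : forall n Rt j, msize n Rt j = (2 ^ ex (INR n * Rt j))%nat.
Proof. reflexivity. Qed.

Fixpoint rsum (f : nat -> R) (T : list nat) : R :=
  match T with [] => 0 | j :: T' => f j + rsum f T' end.

Fixpoint esum (n : nat) (Rt : nat -> R) (T : list nat) : nat :=
  match T with [] => 0%nat | j :: T' => (ex (INR n * Rt j) + esum n Rt T')%nat end.

Lemma rsum_close : forall T (Rt Rt' : nat -> R) eps,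
  (forall j, In j T -> Rabs (Rt j - Rt' j) < eps) ->
  rsum Rt' T >= rsum Rt T - INR (length T) * eps.
Proof.
  induction T as [|j T IH]; intros Rt Rt' eps H; cbn [rsum length].
  - change (INR 0) with 0. lra.
  - assert (Hj := H j (or_introl eq_refl)).
    assert (HT := IH Rt Rt' eps (fun i Hi => H i (or_intror Hi))).
    apply Rabs_def2 in Hj. rewrite S_INR. lra.
Qed.

Lemma esum_lower : forall T n (Rt : nat -> R), (forall j, In j T -> 0 <= Rt j) ->
  INR (esum n Rt T) >= INR n * rsum Rt T - INR (length T).
Proof.
  induction T as [|j T IH]; intros n Rt H; cbn [rsum esum length].
  - change (INR 0) with 0. lra.
  - rewrite plus_INR.
    assert (Hj : 0 <= INR n * Rt j) by (apply Rmult_le_pos; [apply pos_INR| apply H; simpl; auto]).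
    destruct (ex_bounds _ Hj) as [H1 _].
    assert (HT := IH n Rt (fun i Hi => H i (or_intror Hi))).
    rewrite S_INR. nra.
Qed.

Lemma exists_INR_gt : forall x, exists N, x < INR N.
Proof.
  intros x. destruct (archimed x) as [H1 H2].
  destruct (Z_le_gt_dec (up x) 0) as [Hz|Hz].
  - exists 0%nat. apply IZR_le in Hz. simpl. lra.
  - exists (Z.to_nat (up x)). rewrite INR_IZR_INZ, Z2Nat.id by lia. auto.
Qed.

Lemma conv_real (T : list nat) (k : nat)
  (HT : forall j, In j T -> (1 <= j <= 5)%nat)
  (H : forall n Rt (c : code 5 3 S_ex A_ex C_ex Rt n),
       (k * n + 1 <= esum n Rt T)%nat -> err_prob c >= 1/2) :
  forall Rt, capacity_region 5 3 S_ex A_ex C_ex Rt -> rsum Rt T <= INR k.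
Proof.
  intros Rt Hc. destruct (Rle_lt_dec (rsum Rt T) (INR k)) as [Hle|Hlt]; auto.
  exfalso.
  set (d := rsum Rt T - INR k).
  set (L := INR (length T)).
  assert (HL : 0 <= L) by apply pos_INR.
  destruct (Hc (d / (2 * (L + 1)))) as [Rt' [[Hnn [cs Hcv]] Hcl]].
  { unfold d. apply Rdiv_lt_0_compat; lra. }
  assert (Hs := rsum_close T Rt Rt' (d / (2 * (L+1))) (fun j Hj => Hcl j (HT j Hj))).
  fold L in Hs.
  assert (Hs2 : rsum Rt' T >= INR k + d / 2).
  { assert (Hq : L * (d / (2 * (L + 1))) = d / 2 - d / (2 * (L + 1))) by (field; lra).
    assert (0 < d / (2 * (L + 1))) by (apply Rdiv_lt_0_compat; unfold d; lra).
    unfold d in *; lra. }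
  destruct (exists_INR_gt (2 * L / d)) as [N0 HN0].
  destruct (Hcv (1/2)) as [N HN]; [lra|].
  set (m := Nat.max N N0).
  assert (Hm1 : (m >= N)%nat) by lia.
  assert (Hm2 : INR N0 <= INR m) by (apply le_INR; lia).
  specialize (HN m Hm1). unfold R_dist in HN. rewrite Rminus_0_r in HN.
  assert (He := H m Rt' (cs m)).
  assert (Hlow := esum_lower T m Rt' (fun j Hj => Hnn j (HT j Hj))).
  fold L in Hlow.
  assert (Hd : 0 < d) by (unfold d; lra).
  assert (Hmd : INR m * (d / 2) > L).
  { assert (2 * L / d < INR m) by lra.
    apply (Rmult_lt_compat_r (d/2)) in H0; [|lra].
    replace (2 * L / d * (d / 2)) with L in H0 by (field; lra). lra. }
  assert (Hkm : INR (k * m) < INR (esum m Rt' T)).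
  { rewrite mult_INR. assert (INR m * rsum Rt' T >= INR m * (INR k + d/2)).
    { apply Rle_ge, Rmult_le_compat_l; [apply pos_INR| lra]. }
    nra. }
  apply INR_lt in Hkm.
  assert (err_prob (cs m) >= 1/2) by (apply He; lia).
  apply Rabs_def2 in HN. lra.
Qed.

Lemma pw1 : forall n, (2 * 2^n = 2^(1*n+1))%nat.
Proof. intros. rewrite Nat.pow_add_r, Nat.mul_1_l, Nat.pow_1_r. lia. Qed.
Lemma pw2 : forall n, (2 * (2^n * 2^n) = 2^(2*n+1))%nat.
Proof. intros. rewrite Nat.pow_add_r. replace (2*n)%nat with (n+n)%nat by lia. rewrite Nat.pow_add_r. simpl. lia. Qed.
Lemma pw3 : forall n, (2 * (2^n * (2^n * 2^n)) = 2^(3*n+1))%nat.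
Proof. intros. rewrite Nat.pow_add_r. replace (3*n)%nat with (n+(n+n))%nat by lia. rewrite !Nat.pow_add_r. simpl. lia. Qed.

Ltac conv_case lem pw :=
  apply conv_real;
  [ let j := fresh in let Hj := fresh in intros j Hj; simpl in Hj;
    repeat (destruct Hj as [Hj|Hj]; [subst; lia|]); destruct Hj
  | let n := fresh "n" in let Rt := fresh "Rt" in let c := fresh "c" in let Hk := fresh "Hk" in
    intros n Rt c Hk; apply (lem n Rt c); cbv beta; rewrite pw; rewrite ?msize_ex;
    rewrite <- ?Nat.pow_add_r; apply Nat.pow_le_mono_r; [lia|];
    cbn [esum] in Hk; lia
  | idtac ].

Lemma conv_all : forall Rt, capacity_region 5 3 S_ex A_ex C_ex Rt ->
  (0 <= Rt 1%nat /\ 0 <= Rt 2%nat /\ 0 <= Rt 3%nat /\ 0 <= Rt 4%nat /\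
   0 <= Rt 5%nat /\
   Rt 3%nat <= 2 /\ Rt 5%nat <= 1 /\
   Rt 1%nat + Rt 3%nat <= 3 /\ Rt 1%nat + Rt 5%nat <= 2 /\
   Rt 4%nat + Rt 5%nat <= 2 /\
   Rt 1%nat + Rt 2%nat + Rt 5%nat <= 3 /\
   Rt 1%nat + Rt 4%nat + Rt 5%nat <= 3 /\
   Rt 2%nat + Rt 4%nat + Rt 5%nat <= 3 /\
   Rt 3%nat + Rt 4%nat + Rt 5%nat <= 3).
Proof.
  intros Rt Hc.
  assert (Hnn : forall j, (1 <= j <= 5)%nat -> 0 <= Rt j).
  { intros j Hj. destruct (Rle_lt_dec 0 (Rt j)) as [H|H]; auto.
    destruct (Hc (- Rt j)) as [Rt' [[Hnn _] Hcl]]; [lra|].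
    specialize (Hcl j Hj). specialize (Hnn j Hj). apply Rabs_def2 in Hcl. lra. }
  assert (H3 : rsum Rt [3%nat] <= INR 2) by (conv_case @conv_3 pw2; auto).
  assert (H5 : rsum Rt [5%nat] <= INR 1) by (conv_case @conv_5 pw1; auto).
  assert (H13 : rsum Rt [1%nat;3%nat] <= INR 3) by (conv_case @conv_13 pw3; auto).
  assert (H15 : rsum Rt [1%nat;5%nat] <= INR 2) by (conv_case @conv_15 pw2; auto).
  assert (H45 : rsum Rt [4%nat;5%nat] <= INR 2) by (conv_case @conv_45 pw2; auto).
  assert (H125 : rsum Rt [1%nat;2%nat;5%nat] <= INR 3) by (conv_case @conv_125 pw3; auto).
  assert (H145 : rsum Rt [1%nat;4%nat;5%nat] <= INR 3) by (conv_case @conv_145 pw3; auto).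
  assert (H245 : rsum Rt [2%nat;4%nat;5%nat] <= INR 3) by (conv_case @conv_245 pw3; auto).
  assert (H345 : rsum Rt [3%nat;4%nat;5%nat] <= INR 3) by (conv_case @conv_345 pw3; auto).
  simpl in *. 
  pose proof (Hnn 1%nat ltac:(lia)). pose proof (Hnn 2%nat ltac:(lia)).
  pose proof (Hnn 3%nat ltac:(lia)). pose proof (Hnn 4%nat ltac:(lia)).
  pose proof (Hnn 5%nat ltac:(lia)).
  repeat split; lra.
Qed.

Fixpoint rsumL (mu : nat -> R) (l : list nat) : R :=
  match l with [] => 0 | t :: l' => mu t + rsumL mu l' end.

Definition wd (mu : nat -> R) (n : nat) (t : nat) : nat := ex (mu t * INR n).

Lemma sum_w_le mu n l : (forall t, 0 <= mu t) ->
  INR (sumn (map (wd mu n) l)) <= INR n * rsumL mu l.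
Proof.
  intros Hmu. induction l as [|t l IH]; cbn [map sumn fold_right rsumL].
  - change (INR 0) with 0. lra.
  - fold (sumn (map (wd mu n) l)). rewrite plus_INR.
    assert (0 <= mu t * INR n) by (apply Rmult_le_pos; [auto| apply pos_INR]).
    destruct (ex_bounds _ H) as [_ H2]. unfold wd in *. nra.
Qed.

Lemma sum_w_ge mu n l : (forall t, 0 <= mu t) ->
  INR (sumn (map (wd mu n) l)) >= INR n * rsumL mu l - INR (length l).
Proof.
  intros Hmu. induction l as [|t l IH]; cbn [map sumn fold_right rsumL length].
  - change (INR 0) with 0. lra.
  - fold (sumn (map (wd mu n) l)). rewrite plus_INR, S_INR.
    assert (0 <= mu t * INR n) by (apply Rmult_le_pos; [auto| apply pos_INR]).
    destruct (ex_bounds _ H) as [H1 _]. unfold wd in *. nra.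
Qed.

Lemma stypes_eq k : In k [1;2;3]%nat -> stypes k = [0;1;2;3;4;5;6;7;7;8;8]%nat.
Proof. intros Hk. simpl in Hk. destruct Hk as [<-|[<-|[<-|[]]]]; reflexivity. Qed.

Definition senderload (mu : nat -> R) := rsumL mu [0;1;2;3;4;5;6;7;7;8;8]%nat.

Lemma err_prob_zero {n Rt} (c : code 5 3 S_ex A_ex C_ex Rt n) :
  (forall m, valid_msgs 5 n Rt m -> err_event c m = false) -> err_prob c = 0.
Proof.
  intros H. unfold err_prob. cbv zeta. fold (szs n Rt).
  rewrite count_tuples_eq.
  assert (Hf : filter (err_event c) (tuples (szs n Rt)) = []).
  { assert (Hin : forall m, In m (tuples (szs n Rt)) -> err_event c m = false)
      by (intros m Hm; apply H; apply valid_In; auto).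
    induction (tuples (szs n Rt)) as [|x l IH]; simpl; auto.
    rewrite Hin by (simpl; auto). apply IH. intros; apply Hin; simpl; auto. }
  rewrite Hf. simpl. unfold Rdiv. apply Rmult_0_l.
Qed.

Lemma ex_0 : ex 0 = 0%nat.
Proof.
  destruct (ex_bounds 0 (Rle_refl 0)) as [H1 H2].
  destruct (ex 0); auto. rewrite S_INR in H2. pose proof (pos_INR n). lra.
Qed.

Definition mkcode (mu : nat -> R)
  (Hs : forall n k, In k [1;2;3]%nat -> (sumn (sw (wd mu n) k) <= n)%nat)
  (Rt : nat -> R) (n : nat) : code 5 3 S_ex A_ex C_ex Rt n.
Proof.
  refine {| enc := encode (wd mu n); dec := decode (wd mu n) |}.
  - intros k m m' Hk _ _ Ha. apply encode_dep; [apply in13; auto| auto].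
  - intros k m Hk _. unfold C_ex. replace (pow2floor (INR n * 1)) with (2^n)%nat by (symmetry; exact (pow2floor_n n)).
    apply (Nat.lt_le_trans _ _ _ (encode_lt _ k m (in13 k Hk))).
    apply Nat.pow_le_mono_r; [lia|]. apply Hs. apply in13; auto.
  - intros j l m m' Hj _ _ Ha. apply decode_dep; [apply in15; auto| auto].
Defined.

Lemma ctypes_len j : (1 <= j <= 5)%nat -> (length (ctypes j) <= 17)%nat.
Proof. intros Hj. destruct j as [|[|[|[|[|[|j]]]]]]; simpl; lia. Qed.

Lemma achieve_mu (Rt mu : nat -> R) (eps : R) :
  (forall j, (1 <= j <= 5)%nat -> 0 <= Rt j) -> (forall t, 0 <= mu t) ->
  senderload mu <= 1 -> 0 < eps ->
  (forall j, (1 <= j <= 5)%nat -> Rt j = 0 \/ Rt j + eps <= rsumL mu (ctypes j)) ->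
  achievable 5 3 S_ex A_ex C_ex Rt.
Proof.
  intros Hnn Hmu Hload Heps Hj.
  assert (Hs : forall n k, In k [1;2;3]%nat -> (sumn (sw (wd mu n) k) <= n)%nat).
  { intros n k Hk. apply INR_le. unfold sw. rewrite stypes_eq by auto.
    pose proof (sum_w_le mu n [0;1;2;3;4;5;6;7;7;8;8]%nat Hmu). fold (senderload mu) in H.
    pose proof (pos_INR n). nra. }
  split; auto.
  exists (mkcode mu Hs Rt).
  destruct (exists_INR_gt (17 / eps)) as [N0 HN0].
  intros e He. exists N0. intros n Hn. unfold R_dist.
  replace (err_prob (mkcode mu Hs Rt n)) with 0. { rewrite Rminus_0_r, Rabs_R0. auto. }
  symmetry. apply err_prob_zero. intros m Hv.
  unfold err_event. destruct (existsb _ _) eqn:E; auto.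
  apply existsb_exists in E. destruct E as [j [Hjin Hf]].
  apply in_seq in Hjin.
  assert (Hdc : dec (mkcode mu Hs Rt n) j (sent (mkcode mu Hs Rt n) m) m = msg j m).
  { simpl. unfold sent. simpl. apply (decode_correct (wd mu n) m j (in15 j ltac:(lia))).
    destruct Hv as [_ Hv]. specialize (Hv j ltac:(lia)).
    apply (Nat.lt_le_trans _ _ _ Hv). unfold msize, pow2floor. fold (ex (INR n * Rt j)).
    apply Nat.pow_le_mono_r; [lia|].
    destruct (Hj j ltac:(lia)) as [H0|H0].
    - rewrite H0, Rmult_0_r, ex_0. lia.
    - apply INR_le.
      assert (HR : 0 <= INR n * Rt j) by (apply Rmult_le_pos; [apply pos_INR| apply Hnn; lia]).
      destruct (ex_bounds _ HR) as [_ H1].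
      pose proof (sum_w_ge mu n (ctypes j) Hmu) as H2.
      unfold cw. 
      pose proof (le_INR _ _ (ctypes_len j ltac:(lia))) as HL.
      replace (INR 17) with 17 in HL by (simpl; lra).
      assert (Hn' : INR N0 <= INR n) by (apply le_INR; lia).
      assert (Hne : INR n * eps >= 17).
      { assert (17 / eps * eps < INR n * eps) by (apply Rmult_lt_compat_r; lra).
        replace (17 / eps * eps) with 17 in H by (field; lra). lra. }
      assert (INR n * (Rt j + eps) <= INR n * rsumL mu (ctypes j)) by (apply Rmult_le_compat_l; [apply pos_INR| lra]).
      fold (sumn (map (wd mu n) (ctypes j))). nra. }
  rewrite Hdc, Nat.eqb_refl in Hf. discriminate.
Qed.

Lemma argmax_list : forall l : list R, l <> [] -> exists m, In m l /\ Forall (fun x => x <= m) l.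
Proof.
  induction l as [|a l IH]; intros H; [congruence|].
  destruct l as [|b l].
  - exists a. split; [simpl; auto| constructor; [lra| constructor]].
  - destruct (IH ltac:(discriminate)) as [m [Hm Hf]].
    destruct (Rle_dec a m) as [Ha|Ha].
    + exists m. split; [right; auto| constructor; auto].
    + exists a. split; [left; auto| constructor; [lra|]].
      eapply Forall_impl; [|exact Hf]. intros x Hx. simpl in Hx. lra.
Qed.

Ltac unpack H :=
  match type of H with
  | Forall _ (_ :: _) =>
      let H1 := fresh "Hm" in
      pose proof (Forall_inv H) as H1; cbv beta in H1; apply Forall_inv_tail in H; unpack H
  | _ => clear H
  end.

Ltac leaf_tac := repeat split; lra.

Lemma decomp (x1 x2 x3 x4 x5 : R) :
  0 <= x1 -> 0 <= x2 -> 0 <= x3 -> 0 <= x4 -> 0 <= x5 ->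
  x3 <= 2 -> x5 <= 1 -> x1 + x3 <= 3 -> x1 + x5 <= 2 -> x4 + x5 <= 2 ->
  x1 + x2 + x5 <= 3 -> x1 + x4 + x5 <= 3 -> x2 + x4 + x5 <= 3 -> x3 + x4 + x5 <= 3 ->
  exists l0 l1 l2 l3 l4 l5 l6 l7 l8 : R,
    0 <= l0 /\ 0 <= l1 /\ 0 <= l2 /\ 0 <= l3 /\ 0 <= l4 /\ 0 <= l5 /\ 0 <= l6 /\ 0 <= l7 /\ 0 <= l8 /\
    l0 + l1 + l2 + l3 + l4 + l5 + l6 + l7 + l8 <= 1 /\
    x1 <= l2 + l3 + l4 + l5 + 2 * l6 + 3/2 * l7 + 3/2 * l8 /\
    x2 <= 2 * l0 + 3 * l1 + l2 + l3 + l4 + 2 * l5 + l6 + l7 + 3/2 * l8 /\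
    x3 <= 2 * l0 + 2 * l1 + l2 + l3 + 2 * l4 + 2 * l5 + l6 + 3/2 * l7 + 3/2 * l8 /\
    x4 <= l2 + 2 * l3 + l5 + l6 + l7 + 3/2 * l8 /\
    x5 <= l0 + l2 + l4 + 1/2 * l7.
Proof.
  intros.
  destruct (argmax_list [(1/2)*x3; (1)*x5; (1/3)*x1 + (1/3)*x3; (1/2)*x1 + (1/2)*x5; (1/2)*x4 + (1/2)*x5; (1/3)*x1 + (1/3)*x2 + (1/3)*x5; (1/3)*x1 + (1/3)*x4 + (1/3)*x5; (1/3)*x2 + (1/3)*x4 + (1/3)*x5; (1/3)*x3 + (1/3)*x4 + (1/3)*x5]) as [m [Hin Hall]]; [discriminate|]; unpack Hall;
  simpl in Hin; destruct Hin as [<-|[<-|[<-|[<-|[<-|[<-|[<-|[<-|[<-|[]]]]]]]]]].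
  {
    destruct (argmax_list [(-1/2)*x2 + (1/2)*x3; (1/2)*x3 + (-1)*x5; (1)*x1]) as [m [Hin Hall]]; [discriminate|]; unpack Hall;
    simpl in Hin; destruct Hin as [<-|[<-|[<-|[]]]].
    {
      exists ((1/2)*x2), (0), (0), (0), ((-1/2)*x2 + (1/2)*x3 + (-1)*x4), ((1)*x4), (0), (0), (0); leaf_tac.
    }
    {
      destruct (argmax_list [(-1/3)*x2 + (1/2)*x3 + (-1/3)*x5; (1)*x1; (1)*x4]) as [m [Hin Hall]]; [discriminate|]; unpack Hall;
      simpl in Hin; destruct Hin as [<-|[<-|[<-|[]]]].
      {
        exists ((1)*x5), ((1/3)*x2 + (-2/3)*x5), (0), (0), ((-1/3)*x2 + (1/2)*x3 + (-1)*x4 + (-1/3)*x5), ((1)*x4), (0), (0), (0); leaf_tac.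
      }
      {
        exists ((1)*x5), ((-1)*x1 + (1/2)*x3 + (-1)*x5), (0), (0), (0), ((1)*x1), (0), (0), (0); leaf_tac.
      }
      {
        exists ((1)*x5), ((1/2)*x3 + (-1)*x4 + (-1)*x5), (0), (0), (0), ((1)*x4), (0), (0), (0); leaf_tac.
      }
    }
    {
      exists ((-1)*x1 + (1/2)*x3), (0), (0), (0), ((1)*x1 + (-1/2)*x3 + (1)*x5), ((1/2)*x3 + (-1)*x5), (0), (0), (0); leaf_tac.
    }
  }
  {
    destruct (argmax_list [(-1/2)*x2 + (1)*x5; (-1/2)*x3 + (1)*x5; (1)*x1; (1)*x4]) as [m [Hin Hall]]; [discriminate|]; unpack Hall;
    simpl in Hin; destruct Hin as [<-|[<-|[<-|[<-|[]]]]].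
    {
      exists ((1/2)*x2), (0), ((1)*x4), (0), ((-1/2)*x2 + (-1)*x4 + (1)*x5), (0), (0), (0), (0); leaf_tac.
    }
    {
      destruct (argmax_list [(1)*x1; (1)*x4; (1/2)*x1 + (1/2)*x2 + (-1/2)*x3; (1/2)*x2 + (-1/2)*x3 + (1/2)*x4]) as [m [Hin Hall]]; [discriminate|]; unpack Hall;
      simpl in Hin; destruct Hin as [<-|[<-|[<-|[<-|[]]]]].
      {
        exists ((-1)*x1 + (1)*x5), (0), ((1)*x1), (0), (0), (0), (0), (0), (0); leaf_tac.
      }
      {
        exists ((-1)*x4 + (1)*x5), (0), ((1)*x4), (0), (0), (0), (0), (0), (0); leaf_tac.
      }
      {
        exists ((-1)*x1 + (1)*x5), (0), ((1)*x1), (0), (0), (0), (0), (0), (0); leaf_tac.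
      }
      {
        exists ((-1)*x4 + (1)*x5), (0), ((1)*x4), (0), (0), (0), (0), (0), (0); leaf_tac.
      }
    }
    {
      exists ((-1)*x1 + (1)*x5), (0), ((1)*x4), (0), ((1)*x1 + (-1)*x4), (0), (0), (0), (0); leaf_tac.
    }
    {
      exists ((-1)*x4 + (1)*x5), (0), ((1)*x4), (0), (0), (0), (0), (0), (0); leaf_tac.
    }
  }
  {
    destruct (argmax_list [(1/3)*x1 + (-1)*x2 + (1/3)*x3; (1/3)*x1 + (1/3)*x3 + (-1)*x5; (1/3)*x1 + (-2/3)*x3 + (1)*x4 + (1)*x5]) as [m [Hin Hall]]; [discriminate|]; unpack Hall;
    simpl in Hin; destruct Hin as [<-|[<-|[<-|[]]]].
    {
      destruct (argmax_list [(2/3)*x1 + (-1)*x2 + (-1/3)*x3 + (1)*x5; (1/3)*x1 + (-1/2)*x2 + (-1/6)*x3 + (1/2)*x4 + (1/2)*x5; (-2/3)*x1 + (-1)*x2 + (1/3)*x3 + (1)*x4 + (1)*x5]) as [m [Hin Hall]]; [discriminate|]; unpack Hall;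
      simpl in Hin; destruct Hin as [<-|[<-|[<-|[]]]].
      {
        destruct (argmax_list [(2/3)*x1 + (-1/3)*x3; (1)*x4]) as [m [Hin Hall]]; [discriminate|]; unpack Hall;
        simpl in Hin; destruct Hin as [<-|[<-|[]]].
        {
          exists (0), (0), (0), (0), ((-1/3)*x1 + (2/3)*x3), (0), ((2/3)*x1 + (-1/3)*x3), (0), (0); leaf_tac.
        }
        {
          exists (0), (0), (0), (0), ((1/3)*x1 + (1/3)*x3 + (-1)*x4), (0), ((4/3)*x1 + (-2/3)*x3 + (-1)*x4), ((-4/3)*x1 + (2/3)*x3 + (2)*x4), (0); leaf_tac.
        }
      }
      {
        exists (0), (0), (0), (0), ((1/2)*x2 + (1/2)*x3 + (-1/2)*x4 + (-1/2)*x5), (0), ((1)*x1 + (1/2)*x2 + (-1/2)*x3 + (-1/2)*x4 + (-1/2)*x5), ((-2)*x2 + (2)*x5), ((-2/3)*x1 + (1)*x2 + (1/3)*x3 + (1)*x4 + (-1)*x5); leaf_tac.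
      }
      {
        destruct (argmax_list [(-2/3)*x1 + (1/3)*x3 + (1)*x4; (4/3)*x1 + (-2/3)*x3]) as [m [Hin Hall]]; [discriminate|]; unpack Hall;
        simpl in Hin; destruct Hin as [<-|[<-|[]]].
        {
          exists (0), (0), (0), (0), ((1)*x1 + (-1)*x4), ((-2)*x1 + (1)*x3 + (1)*x4), (0), (0), ((4/3)*x1 + (-2/3)*x3); leaf_tac.
        }
        {
          exists (0), (0), (0), (0), ((-1)*x1 + (1)*x3), (0), (0), ((4)*x1 + (-2)*x3 + (-2)*x4), ((-8/3)*x1 + (4/3)*x3 + (2)*x4); leaf_tac.
        }
      }
    }
    {
      destruct (argmax_list [(1/3)*x1 + (-1/2)*x2 + (1/3)*x3 + (-1/2)*x5; (1/3)*x1 + (1/3)*x3 + (-1)*x4 + (-1)*x5; (2/3)*x1 + (-1/3)*x3; (1/3)*x1 + (-2/3)*x3 + (1)*x4 + (1)*x5]) as [m [Hin Hall]]; [discriminate|]; unpack Hall;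
      simpl in Hin; destruct Hin as [<-|[<-|[<-|[<-|[]]]]].
      {
        destruct (argmax_list [(2/3)*x1 + (-1/3)*x3; (1/3)*x1 + (-1/4)*x2 + (-1/6)*x3 + (1/2)*x4 + (1/4)*x5; (-2/3)*x1 + (-1/2)*x2 + (1/3)*x3 + (1)*x4 + (1/2)*x5]) as [m [Hin Hall]]; [discriminate|]; unpack Hall;
        simpl in Hin; destruct Hin as [<-|[<-|[<-|[]]]].
        {
          exists (0), (0), (0), (0), ((-1/3)*x1 + (-1/2)*x2 + (2/3)*x3 + (1/2)*x5), ((1/2)*x2 + (-1/2)*x5), ((2/3)*x1 + (-1/3)*x3), (0), (0); leaf_tac.
        }
        {
          exists (0), (0), (0), (0), ((-1/4)*x2 + (1/2)*x3 + (-1/2)*x4 + (1/4)*x5), ((1/2)*x2 + (-1/2)*x5), ((1)*x1 + (1/4)*x2 + (-1/2)*x3 + (-1/2)*x4 + (-1/4)*x5), (0), ((-2/3)*x1 + (-1/2)*x2 + (1/3)*x3 + (1)*x4 + (1/2)*x5); leaf_tac.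
        }
        {
          exists (0), (0), (0), (0), ((1)*x1 + (-1)*x4), ((-2)*x1 + (1)*x3 + (1)*x4), (0), (0), ((4/3)*x1 + (-2/3)*x3); leaf_tac.
        }
      }
      {
        exists (0), (0), (0), (0), ((1)*x5), ((-1/3)*x1 + (2/3)*x3 + (-1)*x5), ((2/3)*x1 + (-1/3)*x3), (0), (0); leaf_tac.
      }
      {
        exists (0), (0), (0), (0), ((1)*x5), ((-1/3)*x1 + (2/3)*x3 + (-1)*x5), ((2/3)*x1 + (-1/3)*x3), (0), (0); leaf_tac.
      }
      {
        exists (0), (0), (0), (0), ((1)*x5), ((1)*x3 + (-1)*x4 + (-2)*x5), ((1)*x1 + (-1)*x4 + (-1)*x5), (0), ((-2/3)*x1 + (-2/3)*x3 + (2)*x4 + (2)*x5); leaf_tac.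
      }
    }
    {
      exists (0), (0), (0), (0), ((1)*x3 + (-1)*x4 + (-1)*x5), (0), ((1)*x1 + (-1)*x4 + (-1)*x5), ((-2)*x3 + (2)*x4 + (4)*x5), ((-2/3)*x1 + (4/3)*x3 + (-2)*x5); leaf_tac.
    }
  }
  {
    destruct (argmax_list [(1/2)*x1 + (-1)*x2 + (1/2)*x5; (1/2)*x1 + (-1)*x3 + (1/2)*x5; (1/2)*x1 + (-1)*x4 + (1/2)*x5; (1/2)*x1 + (-1/2)*x5; (1)*x3 + (-1)*x5]) as [m [Hin Hall]]; [discriminate|]; unpack Hall;
    simpl in Hin; destruct Hin as [<-|[<-|[<-|[<-|[<-|[]]]]]].
    {
      destruct (argmax_list [(1/2)*x1 + (-1/2)*x5; (1/4)*x1 + (-1/2)*x2 + (1/2)*x3 + (-1/4)*x5; (-1)*x2 + (1)*x4; (-1/4)*x1 + (-1)*x2 + (1/2)*x3 + (1/2)*x4 + (1/4)*x5]) as [m [Hin Hall]]; [discriminate|]; unpack Hall;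
      simpl in Hin; destruct Hin as [<-|[<-|[<-|[<-|[]]]]].
      {
        exists (0), (0), ((1)*x5), (0), (0), (0), ((1/2)*x1 + (-1/2)*x5), (0), (0); leaf_tac.
      }
      {
        destruct (argmax_list [(1/2)*x1 + (-1/2)*x5; (-1)*x2 + (1)*x4]) as [m [Hin Hall]]; [discriminate|]; unpack Hall;
        simpl in Hin; destruct Hin as [<-|[<-|[]]].
        {
          exists (0), (0), ((1/4)*x1 + (1/2)*x2 + (-1/2)*x3 + (3/4)*x5), (0), ((-1/4)*x1 + (-1/2)*x2 + (1/2)*x3 + (1/4)*x5), (0), ((1/2)*x1 + (-1/2)*x5), (0), (0); leaf_tac.
        }
        {
          exists (0), (0), ((1/4)*x1 + (1/2)*x2 + (-1/2)*x3 + (3/4)*x5), (0), ((1/4)*x1 + (1/2)*x2 + (1/2)*x3 + (-1)*x4 + (-1/4)*x5), (0), ((1)*x1 + (1)*x2 + (-1)*x4 + (-1)*x5), ((-1)*x1 + (-2)*x2 + (2)*x4 + (1)*x5), (0); leaf_tac.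
        }
      }
      {
        destruct (argmax_list [(1/2)*x1 + (-1/2)*x5; (1/4)*x1 + (-1/2)*x2 + (1/2)*x3 + (-1/4)*x5; (-1/2)*x1 + (-1)*x2 + (1)*x3 + (1/2)*x5]) as [m [Hin Hall]]; [discriminate|]; unpack Hall;
        simpl in Hin; destruct Hin as [<-|[<-|[<-|[]]]].
        {
          exists (0), (0), ((1)*x5), (0), (0), (0), ((1/2)*x1 + (-1/2)*x5), (0), (0); leaf_tac.
        }
        {
          exists (0), (0), ((1/4)*x1 + (1/2)*x2 + (-1/2)*x3 + (3/4)*x5), (0), (0), (0), ((3/4)*x1 + (1/2)*x2 + (-1/2)*x3 + (-3/4)*x5), ((-1/2)*x1 + (-1)*x2 + (1)*x3 + (1/2)*x5), (0); leaf_tac.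
        }
        {
          exists (0), (0), ((-1/2)*x1 + (3/2)*x5), (0), (0), (0), (0), ((1)*x1 + (-1)*x5), (0); leaf_tac.
        }
      }
      {
        exists (0), (0), ((-1/4)*x1 + (-1/2)*x3 + (1/2)*x4 + (5/4)*x5), (0), ((-1/4)*x1 + (1/2)*x3 + (-1/2)*x4 + (1/4)*x5), (0), (0), ((1)*x1 + (-1)*x5), (0); leaf_tac.
      }
    }
    {
      exists (0), (0), ((1)*x5), (0), (0), (0), ((1/2)*x1 + (-1/2)*x5), (0), (0); leaf_tac.
    }
    {
      exists (0), (0), ((1)*x4), (0), ((-1)*x4 + (1)*x5), (0), ((1/2)*x1 + (-1/2)*x5), (0), (0); leaf_tac.
    }
    {
      exists (0), (0), ((1)*x5), (0), (0), (0), ((1/2)*x1 + (-1/2)*x5), (0), (0); leaf_tac.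
    }
    {
      destruct (argmax_list [(1/2)*x1 + (-1)*x2 + (1/2)*x5; (1/2)*x1 + (-1/2)*x5; (-1/2)*x1 + (1)*x3 + (1)*x4 + (-3/2)*x5]) as [m [Hin Hall]]; [discriminate|]; unpack Hall;
      simpl in Hin; destruct Hin as [<-|[<-|[<-|[]]]].
      {
        destruct (argmax_list [(1/2)*x1 + (-1/2)*x5; (-1/2)*x1 + (1)*x3 + (1)*x4 + (-3/2)*x5]) as [m [Hin Hall]]; [discriminate|]; unpack Hall;
        simpl in Hin; destruct Hin as [<-|[<-|[]]].
        {
          exists (0), (0), ((1/2)*x1 + (-1)*x3 + (3/2)*x5), (0), ((-1/2)*x1 + (1)*x3 + (-1/2)*x5), (0), ((1/2)*x1 + (-1/2)*x5), (0), (0); leaf_tac.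
        }
        {
          exists (0), (0), ((1/2)*x1 + (-1)*x3 + (3/2)*x5), (0), ((1/2)*x1 + (-1)*x4 + (1/2)*x5), (0), ((3/2)*x1 + (-1)*x3 + (-1)*x4 + (1/2)*x5), ((-2)*x1 + (2)*x3 + (2)*x4 + (-2)*x5), (0); leaf_tac.
        }
      }
      {
        exists (0), (0), ((1/2)*x1 + (-1)*x3 + (3/2)*x5), (0), ((-1/2)*x1 + (1)*x3 + (-1/2)*x5), (0), ((1/2)*x1 + (-1/2)*x5), (0), (0); leaf_tac.
      }
      {
        exists (0), (0), ((1/2)*x1 + (-1)*x3 + (3/2)*x5), (0), ((1/2)*x1 + (-1)*x4 + (1/2)*x5), (0), ((3/2)*x1 + (-1)*x3 + (-1)*x4 + (1/2)*x5), ((-2)*x1 + (2)*x3 + (2)*x4 + (-2)*x5), (0); leaf_tac.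
      }
    }
  }
  {
    exists (0), (0), ((1)*x5), ((1/2)*x4 + (-1/2)*x5), (0), (0), (0), (0), (0); leaf_tac.
  }
  {
    destruct (argmax_list [(1/3)*x1 + (1/3)*x2 + (-1/2)*x3 + (1/3)*x5; (1/3)*x1 + (1/3)*x2 + (-2/3)*x5; (1/3)*x1 + (-2/3)*x2 + (1)*x3 + (-2/3)*x5; (2/3)*x1 + (-1/3)*x2 + (2/3)*x5; (1/3)*x1 + (-1/6)*x2 + (1/2)*x4 + (1/3)*x5]) as [m [Hin Hall]]; [discriminate|]; unpack Hall;
    simpl in Hin; destruct Hin as [<-|[<-|[<-|[<-|[<-|[]]]]]].
    {
      destruct (argmax_list [(1/3)*x1 + (1/3)*x2 + (-2/3)*x5; (2/3)*x1 + (-1/3)*x2 + (2/3)*x5; (1/3)*x1 + (-1/6)*x2 + (1/2)*x4 + (1/3)*x5]) as [m [Hin Hall]]; [discriminate|]; unpack Hall;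
      simpl in Hin; destruct Hin as [<-|[<-|[<-|[]]]].
      {
        destruct (argmax_list [(1/2)*x1; (1/3)*x1 + (1/3)*x4]) as [m [Hin Hall]]; [discriminate|]; unpack Hall;
        simpl in Hin; destruct Hin as [<-|[<-|[]]].
        {
          exists ((1)*x5), ((-1/6)*x1 + (1/3)*x2 + (-2/3)*x5), (0), (0), (0), (0), ((1/2)*x1), (0), (0); leaf_tac.
        }
        {
          exists ((1)*x5), ((1/3)*x2 + (-1/3)*x4 + (-2/3)*x5), (0), (0), (0), (0), ((1)*x1 + (-1)*x4), (0), ((-2/3)*x1 + (4/3)*x4); leaf_tac.
        }
      }
      {
        exists ((-1/3)*x1 + (2/3)*x2 + (-1/3)*x5), (0), ((1/3)*x1 + (-2/3)*x2 + (4/3)*x5), (0), (0), (0), ((1/3)*x1 + (1/3)*x2 + (-2/3)*x5), (0), (0); leaf_tac.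
      }
      {
        exists ((1/2)*x2 + (-1/2)*x4), (0), ((-1/2)*x2 + (1/2)*x4 + (1)*x5), (0), (0), (0), ((1)*x1 + (-1)*x4), (0), ((-2/3)*x1 + (1/3)*x2 + (1)*x4 + (-2/3)*x5); leaf_tac.
      }
    }
    {
      destruct (argmax_list [(1/3)*x1 + (1/3)*x2 + (-1/2)*x3 + (1/3)*x5; (1/3)*x1 + (-2/3)*x2 + (1)*x3 + (-2/3)*x5; (1/2)*x1; (1/3)*x1 + (1/3)*x4]) as [m [Hin Hall]]; [discriminate|]; unpack Hall;
      simpl in Hin; destruct Hin as [<-|[<-|[<-|[<-|[]]]]].
      {
        destruct (argmax_list [(1/2)*x1; (1/3)*x1 + (1/3)*x4]) as [m [Hin Hall]]; [discriminate|]; unpack Hall;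
        simpl in Hin; destruct Hin as [<-|[<-|[]]].
        {
          exists ((1)*x5), ((-1/6)*x1 + (1/3)*x2 + (-2/3)*x5), (0), (0), (0), (0), ((1/2)*x1), (0), (0); leaf_tac.
        }
        {
          exists ((1)*x5), ((1/3)*x2 + (-1/3)*x4 + (-2/3)*x5), (0), (0), (0), (0), ((1)*x1 + (-1)*x4), (0), ((-2/3)*x1 + (4/3)*x4); leaf_tac.
        }
      }
      {
        destruct (argmax_list [(1/3)*x1 + (-2/3)*x2 + (1)*x3 + (-1)*x4 + (-2/3)*x5; (2/3)*x1 + (2/3)*x2 + (-1)*x3 + (2/3)*x5; (1/3)*x1 + (4/3)*x2 + (-2)*x3 + (1)*x4 + (4/3)*x5]) as [m [Hin Hall]]; [discriminate|]; unpack Hall;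
        simpl in Hin; destruct Hin as [<-|[<-|[<-|[]]]].
        {
          exists ((1)*x5), ((1)*x2 + (-1)*x3), (0), (0), (0), ((-1/3)*x1 + (-4/3)*x2 + (2)*x3 + (-4/3)*x5), ((2/3)*x1 + (2/3)*x2 + (-1)*x3 + (2/3)*x5), (0), (0); leaf_tac.
        }
        {
          exists ((1)*x5), ((1)*x2 + (-1)*x3), (0), (0), (0), ((-1/3)*x1 + (-4/3)*x2 + (2)*x3 + (-4/3)*x5), ((2/3)*x1 + (2/3)*x2 + (-1)*x3 + (2/3)*x5), (0), (0); leaf_tac.
        }
        {
          exists ((1)*x5), ((1)*x2 + (-1)*x3), (0), (0), (0), ((-2)*x2 + (3)*x3 + (-1)*x4 + (-2)*x5), ((1)*x1 + (-1)*x4), (0), ((-2/3)*x1 + (4/3)*x2 + (-2)*x3 + (2)*x4 + (4/3)*x5); leaf_tac.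
        }
      }
      {
        exists ((1)*x5), ((-1/6)*x1 + (1/3)*x2 + (-2/3)*x5), (0), (0), (0), (0), ((1/2)*x1), (0), (0); leaf_tac.
      }
      {
        exists ((1)*x5), ((1/3)*x2 + (-1/3)*x4 + (-2/3)*x5), (0), (0), (0), (0), ((1)*x1 + (-1)*x4), (0), ((-2/3)*x1 + (4/3)*x4); leaf_tac.
      }
    }
    {
      destruct (argmax_list [(1/3)*x1 + (1/3)*x2 + (-2/3)*x5; (1/3)*x1 + (1/3)*x2 + (-1)*x3 + (1)*x4 + (4/3)*x5]) as [m [Hin Hall]]; [discriminate|]; unpack Hall;
      simpl in Hin; destruct Hin as [<-|[<-|[]]].
      {
        destruct (argmax_list [(1/3)*x1 + (1/3)*x2 + (-1)*x4 + (-2/3)*x5; (2/3)*x1 + (2/3)*x2 + (-1)*x3 + (2/3)*x5; (1/3)*x1 + (1/3)*x2 + (-1)*x3 + (1)*x4 + (4/3)*x5]) as [m [Hin Hall]]; [discriminate|]; unpack Hall;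
        simpl in Hin; destruct Hin as [<-|[<-|[<-|[]]]].
        {
          exists ((1)*x2 + (-1)*x3 + (1)*x5), (0), (0), (0), ((-1)*x2 + (1)*x3), ((-1/3)*x1 + (-1/3)*x2 + (1)*x3 + (-4/3)*x5), ((2/3)*x1 + (2/3)*x2 + (-1)*x3 + (2/3)*x5), (0), (0); leaf_tac.
        }
        {
          exists ((1)*x2 + (-1)*x3 + (1)*x5), (0), (0), (0), ((-1)*x2 + (1)*x3), ((-1/3)*x1 + (-1/3)*x2 + (1)*x3 + (-4/3)*x5), ((2/3)*x1 + (2/3)*x2 + (-1)*x3 + (2/3)*x5), (0), (0); leaf_tac.
        }
        {
          exists ((1)*x2 + (-1)*x3 + (1)*x5), (0), (0), (0), ((-1)*x2 + (1)*x3), ((1)*x3 + (-1)*x4 + (-2)*x5), ((1)*x1 + (1)*x2 + (-1)*x3 + (-1)*x4), (0), ((-2/3)*x1 + (-2/3)*x2 + (2)*x4 + (4/3)*x5); leaf_tac.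
        }
      }
      {
        exists ((1)*x2 + (-1)*x3 + (1)*x5), (0), (0), (0), ((-1)*x2 + (2)*x3 + (-1)*x4 + (-2)*x5), (0), ((1)*x1 + (1)*x2 + (-1)*x3 + (-1)*x4), ((-2)*x3 + (2)*x4 + (4)*x5), ((-2/3)*x1 + (-2/3)*x2 + (2)*x3 + (-8/3)*x5); leaf_tac.
      }
    }
    {
      destruct (argmax_list [(1)*x2 + (-1)*x3; (2/3)*x1 + (-1/3)*x2 + (-1)*x4 + (2/3)*x5; (1/3)*x1 + (1/3)*x2 + (-2/3)*x5; (1/3)*x1 + (-2/3)*x2 + (1)*x3 + (-2/3)*x5]) as [m [Hin Hall]]; [discriminate|]; unpack Hall;
      simpl in Hin; destruct Hin as [<-|[<-|[<-|[<-|[]]]]].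
      {
        exists ((-1/3)*x1 + (2/3)*x2 + (-1/3)*x5), (0), ((1/3)*x1 + (-2/3)*x2 + (4/3)*x5), (0), (0), (0), ((1/3)*x1 + (1/3)*x2 + (-2/3)*x5), (0), (0); leaf_tac.
      }
      {
        exists ((-1/3)*x1 + (2/3)*x2 + (-1/3)*x5), (0), ((1)*x4), (0), ((1/3)*x1 + (-2/3)*x2 + (-1)*x4 + (4/3)*x5), (0), ((1/3)*x1 + (1/3)*x2 + (-2/3)*x5), (0), (0); leaf_tac.
      }
      {
        exists ((-1/3)*x1 + (2/3)*x2 + (-1/3)*x5), (0), ((1/3)*x1 + (-2/3)*x2 + (4/3)*x5), (0), (0), (0), ((1/3)*x1 + (1/3)*x2 + (-2/3)*x5), (0), (0); leaf_tac.
      }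
      {
        destruct (argmax_list [(1/3)*x1 + (1/3)*x2 + (-2/3)*x5; (-1/3)*x1 + (-1/3)*x2 + (1)*x3 + (1)*x4 + (-4/3)*x5]) as [m [Hin Hall]]; [discriminate|]; unpack Hall;
        simpl in Hin; destruct Hin as [<-|[<-|[]]].
        {
          exists ((-1/3)*x1 + (2/3)*x2 + (-1/3)*x5), (0), ((1/3)*x1 + (1/3)*x2 + (-1)*x3 + (4/3)*x5), (0), ((-1)*x2 + (1)*x3), (0), ((1/3)*x1 + (1/3)*x2 + (-2/3)*x5), (0), (0); leaf_tac.
        }
        {
          exists ((-1/3)*x1 + (2/3)*x2 + (-1/3)*x5), (0), ((1/3)*x1 + (1/3)*x2 + (-1)*x3 + (4/3)*x5), (0), ((2/3)*x1 + (-1/3)*x2 + (-1)*x4 + (2/3)*x5), (0), ((1)*x1 + (1)*x2 + (-1)*x3 + (-1)*x4), ((-4/3)*x1 + (-4/3)*x2 + (2)*x3 + (2)*x4 + (-4/3)*x5), (0); leaf_tac.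
        }
      }
    }
    {
      destruct (argmax_list [(1/3)*x1 + (5/6)*x2 + (-1)*x3 + (-1/2)*x4 + (1/3)*x5; (1/3)*x1 + (1/3)*x2 + (-2/3)*x5; (1/3)*x1 + (-2/3)*x2 + (1)*x3 + (-2/3)*x5]) as [m [Hin Hall]]; [discriminate|]; unpack Hall;
      simpl in Hin; destruct Hin as [<-|[<-|[<-|[]]]].
      {
        exists ((1/2)*x2 + (-1/2)*x4), (0), ((-1/2)*x2 + (1/2)*x4 + (1)*x5), (0), (0), (0), ((1)*x1 + (-1)*x4), (0), ((-2/3)*x1 + (1/3)*x2 + (1)*x4 + (-2/3)*x5); leaf_tac.
      }
      {
        exists ((1/2)*x2 + (-1/2)*x4), (0), ((-1/2)*x2 + (1/2)*x4 + (1)*x5), (0), (0), (0), ((1)*x1 + (-1)*x4), (0), ((-2/3)*x1 + (1/3)*x2 + (1)*x4 + (-2/3)*x5); leaf_tac.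
      }
      {
        exists ((1/2)*x2 + (-1/2)*x4), (0), ((1/2)*x2 + (-1)*x3 + (1/2)*x4 + (1)*x5), (0), (0), (0), ((1)*x1 + (1)*x2 + (-1)*x3 + (-1)*x4), ((-2)*x2 + (2)*x3), ((-2/3)*x1 + (1/3)*x2 + (1)*x4 + (-2/3)*x5); leaf_tac.
      }
    }
  }
  {
    destruct (argmax_list [(1/3)*x1 + (-1)*x2 + (1/3)*x4 + (1/3)*x5; (1/3)*x1 + (-1)*x3 + (1/3)*x4 + (1/3)*x5; (1/3)*x1 + (1/3)*x4 + (-2/3)*x5; (1/3)*x1 + (1)*x3 + (-2/3)*x4 + (-2/3)*x5]) as [m [Hin Hall]]; [discriminate|]; unpack Hall;
    simpl in Hin; destruct Hin as [<-|[<-|[<-|[<-|[]]]]].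
    {
      destruct (argmax_list [(1/3)*x1 + (1/3)*x4 + (-2/3)*x5; (1/3)*x1 + (-1/2)*x2 + (1/2)*x3 + (-1/6)*x4 + (-1/6)*x5; (-2/3)*x1 + (-1)*x2 + (1)*x3 + (1/3)*x4 + (1/3)*x5]) as [m [Hin Hall]]; [discriminate|]; unpack Hall;
      simpl in Hin; destruct Hin as [<-|[<-|[<-|[]]]].
      {
        destruct (argmax_list [(1/3)*x1 + (-1/2)*x2 + (1/2)*x3 + (-1/6)*x4 + (-1/6)*x5; (2/3)*x1 + (-1/3)*x4 + (-1/3)*x5; (-2/3)*x1 + (-1)*x2 + (1)*x3 + (1/3)*x4 + (1/3)*x5]) as [m [Hin Hall]]; [discriminate|]; unpack Hall;
        simpl in Hin; destruct Hin as [<-|[<-|[<-|[]]]].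
        {
          exists (0), (0), ((1)*x5), ((1/2)*x2 + (-1/2)*x3 + (1/2)*x4 + (-1/2)*x5), (0), (0), ((1)*x1 + (1/2)*x2 + (-1/2)*x3 + (-1/2)*x4 + (-1/2)*x5), (0), ((-2/3)*x1 + (-1)*x2 + (1)*x3 + (1/3)*x4 + (1/3)*x5); leaf_tac.
        }
        {
          exists (0), (0), ((1)*x5), ((-1/3)*x1 + (2/3)*x4 + (-1/3)*x5), (0), (0), ((2/3)*x1 + (-1/3)*x4 + (-1/3)*x5), (0), (0); leaf_tac.
        }
        {
          exists (0), (0), ((1)*x5), ((-1)*x1 + (1)*x4), (0), (0), (0), (0), ((4/3)*x1 + (-2/3)*x4 + (-2/3)*x5); leaf_tac.
        }
      }
      {
        exists (0), (0), ((1/2)*x2 + (-1/2)*x3 + (1/2)*x4 + (1/2)*x5), (0), (0), (0), ((1)*x1 + (1/2)*x2 + (-1/2)*x3 + (-1/2)*x4 + (-1/2)*x5), ((-1)*x2 + (1)*x3 + (-1)*x4 + (1)*x5), ((-2/3)*x1 + (4/3)*x4 + (-2/3)*x5); leaf_tac.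
      }
      {
        destruct (argmax_list [(1/3)*x1 + (1/3)*x4 + (-2/3)*x5; (4/3)*x1 + (-2/3)*x4 + (-2/3)*x5]) as [m [Hin Hall]]; [discriminate|]; unpack Hall;
        simpl in Hin; destruct Hin as [<-|[<-|[]]].
        {
          exists (0), (0), ((1)*x5), ((-1)*x1 + (1)*x4), (0), (0), (0), (0), ((4/3)*x1 + (-2/3)*x4 + (-2/3)*x5); leaf_tac.
        }
        {
          exists (0), (0), ((-1)*x1 + (1)*x4 + (1)*x5), (0), (0), (0), (0), ((2)*x1 + (-2)*x4), ((-2/3)*x1 + (4/3)*x4 + (-2/3)*x5); leaf_tac.
        }
      }
    }
    {
      destruct (argmax_list [(1/3)*x1 + (1/3)*x4 + (-2/3)*x5; (1/3)*x1 + (1)*x2 + (-1)*x3 + (-2/3)*x4 + (1/3)*x5; (-2/3)*x1 + (1)*x2 + (-1)*x3 + (1/3)*x4 + (1/3)*x5]) as [m [Hin Hall]]; [discriminate|]; unpack Hall;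
      simpl in Hin; destruct Hin as [<-|[<-|[<-|[]]]].
      {
        destruct (argmax_list [(2/3)*x1 + (-1/3)*x4 + (-1/3)*x5; (1/3)*x1 + (1/2)*x2 + (-1/2)*x3 + (-1/6)*x4 + (-1/6)*x5; (-2/3)*x1 + (1)*x2 + (-1)*x3 + (1/3)*x4 + (1/3)*x5]) as [m [Hin Hall]]; [discriminate|]; unpack Hall;
        simpl in Hin; destruct Hin as [<-|[<-|[<-|[]]]].
        {
          exists (0), (0), ((1)*x5), ((-1/3)*x1 + (2/3)*x4 + (-1/3)*x5), (0), (0), ((2/3)*x1 + (-1/3)*x4 + (-1/3)*x5), (0), (0); leaf_tac.
        }
        {
          exists (0), (0), ((1)*x5), ((-1/2)*x2 + (1/2)*x3 + (1/2)*x4 + (-1/2)*x5), (0), (0), ((1)*x1 + (-1/2)*x2 + (1/2)*x3 + (-1/2)*x4 + (-1/2)*x5), (0), ((-2/3)*x1 + (1)*x2 + (-1)*x3 + (1/3)*x4 + (1/3)*x5); leaf_tac.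
        }
        {
          exists (0), (0), ((1)*x5), ((-1)*x1 + (1)*x4), (0), (0), (0), (0), ((4/3)*x1 + (-2/3)*x4 + (-2/3)*x5); leaf_tac.
        }
      }
      {
        exists (0), (0), ((1)*x5), (0), (0), (0), ((1)*x1 + (-1)*x4), (0), ((-2/3)*x1 + (4/3)*x4 + (-2/3)*x5); leaf_tac.
      }
      {
        exists (0), (0), ((1)*x5), ((-1)*x1 + (1)*x4), (0), (0), (0), (0), ((4/3)*x1 + (-2/3)*x4 + (-2/3)*x5); leaf_tac.
      }
    }
    {
      destruct (argmax_list [(1/3)*x1 + (-1)*x2 + (1/3)*x4 + (1/3)*x5; (1/3)*x1 + (-1)*x3 + (1/3)*x4 + (1/3)*x5; (1/3)*x1 + (1)*x3 + (-2/3)*x4 + (-2/3)*x5; (2/3)*x1 + (-1/3)*x4 + (-1/3)*x5; (1/3)*x1 + (1)*x2 + (-2/3)*x4 + (-2/3)*x5]) as [m [Hin Hall]]; [discriminate|]; unpack Hall;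
      simpl in Hin; destruct Hin as [<-|[<-|[<-|[<-|[<-|[]]]]]].
      {
        destruct (argmax_list [(1/3)*x1 + (-1/2)*x2 + (1/2)*x3 + (-1/6)*x4 + (-1/6)*x5; (2/3)*x1 + (-1/3)*x4 + (-1/3)*x5; (-2/3)*x1 + (-1)*x2 + (1)*x3 + (1/3)*x4 + (1/3)*x5]) as [m [Hin Hall]]; [discriminate|]; unpack Hall;
        simpl in Hin; destruct Hin as [<-|[<-|[<-|[]]]].
        {
          exists (0), (0), ((1)*x5), ((1/2)*x2 + (-1/2)*x3 + (1/2)*x4 + (-1/2)*x5), (0), (0), ((1)*x1 + (1/2)*x2 + (-1/2)*x3 + (-1/2)*x4 + (-1/2)*x5), (0), ((-2/3)*x1 + (-1)*x2 + (1)*x3 + (1/3)*x4 + (1/3)*x5); leaf_tac.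
        }
        {
          exists (0), (0), ((1)*x5), ((-1/3)*x1 + (2/3)*x4 + (-1/3)*x5), (0), (0), ((2/3)*x1 + (-1/3)*x4 + (-1/3)*x5), (0), (0); leaf_tac.
        }
        {
          exists (0), (0), ((1)*x5), ((-1)*x1 + (1)*x4), (0), (0), (0), (0), ((4/3)*x1 + (-2/3)*x4 + (-2/3)*x5); leaf_tac.
        }
      }
      {
        destruct (argmax_list [(2/3)*x1 + (-1/3)*x4 + (-1/3)*x5; (1/3)*x1 + (1/2)*x2 + (-1/2)*x3 + (-1/6)*x4 + (-1/6)*x5; (-2/3)*x1 + (1)*x2 + (-1)*x3 + (1/3)*x4 + (1/3)*x5]) as [m [Hin Hall]]; [discriminate|]; unpack Hall;
        simpl in Hin; destruct Hin as [<-|[<-|[<-|[]]]].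
        {
          exists (0), (0), ((1)*x5), ((-1/3)*x1 + (2/3)*x4 + (-1/3)*x5), (0), (0), ((2/3)*x1 + (-1/3)*x4 + (-1/3)*x5), (0), (0); leaf_tac.
        }
        {
          exists (0), (0), ((1)*x5), ((-1/2)*x2 + (1/2)*x3 + (1/2)*x4 + (-1/2)*x5), (0), (0), ((1)*x1 + (-1/2)*x2 + (1/2)*x3 + (-1/2)*x4 + (-1/2)*x5), (0), ((-2/3)*x1 + (1)*x2 + (-1)*x3 + (1/3)*x4 + (1/3)*x5); leaf_tac.
        }
        {
          exists (0), (0), ((1)*x5), ((-1)*x1 + (1)*x4), (0), (0), (0), (0), ((4/3)*x1 + (-2/3)*x4 + (-2/3)*x5); leaf_tac.
        }
      }
      {
        exists (0), (0), ((1)*x5), ((-1)*x3 + (1)*x4), (0), (0), ((1)*x1 + (-1)*x3), (0), ((-2/3)*x1 + (2)*x3 + (-2/3)*x4 + (-2/3)*x5); leaf_tac.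
      }
      {
        exists (0), (0), ((1)*x5), ((-1/3)*x1 + (2/3)*x4 + (-1/3)*x5), (0), (0), ((2/3)*x1 + (-1/3)*x4 + (-1/3)*x5), (0), (0); leaf_tac.
      }
      {
        exists (0), (0), ((1)*x5), ((-1)*x2 + (1)*x4), (0), (0), ((1)*x1 + (-1)*x2), (0), ((-2/3)*x1 + (2)*x2 + (-2/3)*x4 + (-2/3)*x5); leaf_tac.
      }
    }
    {
      exists (0), (0), ((-1)*x3 + (1)*x4 + (1)*x5), (0), (0), (0), ((1)*x1 + (-1)*x3), ((2)*x3 + (-2)*x4), ((-2/3)*x1 + (4/3)*x4 + (-2/3)*x5); leaf_tac.
    }
  }
  {
    destruct (argmax_list [(1/3)*x2 + (-1/2)*x3 + (1/3)*x4 + (1/3)*x5; (1/3)*x2 + (1/3)*x4 + (-2/3)*x5; (-1/3)*x2 + (2/3)*x4 + (2/3)*x5; (1/2)*x1 + (-1/6)*x2 + (1/3)*x4 + (1/3)*x5]) as [m [Hin Hall]]; [discriminate|]; unpack Hall;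
    simpl in Hin; destruct Hin as [<-|[<-|[<-|[<-|[]]]]].
    {
      destruct (argmax_list [(1/3)*x2 + (1/3)*x4 + (-2/3)*x5; (1)*x1 + (1/3)*x2 + (-1/2)*x3 + (-2/3)*x4 + (1/3)*x5; (1)*x1 + (-2/3)*x2 + (1/2)*x3 + (1/3)*x4 + (1/3)*x5]) as [m [Hin Hall]]; [discriminate|]; unpack Hall;
      simpl in Hin; destruct Hin as [<-|[<-|[<-|[]]]].
      {
        destruct (argmax_list [(1/2)*x1 + (1/3)*x2 + (-1/4)*x3 + (-1/6)*x4 + (-1/6)*x5; (1)*x1 + (-2/3)*x2 + (1/2)*x3 + (1/3)*x4 + (1/3)*x5]) as [m [Hin Hall]]; [discriminate|]; unpack Hall;
        simpl in Hin; destruct Hin as [<-|[<-|[]]].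
        {
          exists ((1/2)*x3), ((-1/6)*x1 + (1/3)*x2 + (-1/4)*x3 + (-1/6)*x4 + (-1/6)*x5), ((-1/2)*x3 + (1)*x5), ((-1/2)*x1 + (1/4)*x3 + (1/2)*x4 + (-1/2)*x5), (0), (0), (0), (0), ((2/3)*x1); leaf_tac.
        }
        {
          exists ((1/2)*x3), (0), ((-1/2)*x3 + (1)*x5), ((-1)*x2 + (1)*x3 + (1)*x4), (0), (0), (0), (0), ((4/3)*x2 + (-1)*x3 + (-2/3)*x4 + (-2/3)*x5); leaf_tac.
        }
      }
      {
        destruct (argmax_list [(1/3)*x2 + (1/3)*x4 + (-2/3)*x5; (1)*x1 + (-1/6)*x2 + (-1/6)*x4 + (1/3)*x5]) as [m [Hin Hall]]; [discriminate|]; unpack Hall;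
        simpl in Hin; destruct Hin as [<-|[<-|[]]].
        {
          exists ((1)*x1 + (-1)*x4 + (1)*x5), ((-2/3)*x1 + (1/3)*x2 + (1/3)*x4 + (-2/3)*x5), ((-1)*x1 + (1)*x4), (0), (0), (0), (0), (0), ((2/3)*x1); leaf_tac.
        }
        {
          exists ((1/2)*x2 + (-1/2)*x4), (0), ((-1/2)*x2 + (1/2)*x4 + (1)*x5), (0), (0), (0), (0), (0), ((1/3)*x2 + (1/3)*x4 + (-2/3)*x5); leaf_tac.
        }
      }
      {
        exists ((1/2)*x3), (0), ((-1/2)*x3 + (1)*x5), ((-1)*x2 + (1)*x3 + (1)*x4), (0), (0), (0), (0), ((4/3)*x2 + (-1)*x3 + (-2/3)*x4 + (-2/3)*x5); leaf_tac.
      }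
    }
    {
      destruct (argmax_list [(1/3)*x2 + (-1/2)*x3 + (1/3)*x4 + (1/3)*x5; (1/2)*x4; (1/3)*x1 + (1/3)*x4; (-2/3)*x2 + (1)*x3 + (1/3)*x4 + (-2/3)*x5]) as [m [Hin Hall]]; [discriminate|]; unpack Hall;
      simpl in Hin; destruct Hin as [<-|[<-|[<-|[<-|[]]]]].
      {
        destruct (argmax_list [(1/2)*x1 + (1/3)*x2 + (-1/2)*x3 + (-1/6)*x4 + (1/3)*x5; (1)*x1 + (-2/3)*x2 + (1)*x3 + (1/3)*x4 + (-2/3)*x5]) as [m [Hin Hall]]; [discriminate|]; unpack Hall;
        simpl in Hin; destruct Hin as [<-|[<-|[]]].
        {
          exists ((1)*x5), ((-1/6)*x1 + (1/3)*x2 + (-1/6)*x4 + (-2/3)*x5), (0), ((-1/2)*x1 + (1/2)*x4), (0), (0), (0), (0), ((2/3)*x1); leaf_tac.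
        }
        {
          exists ((1)*x5), ((1/2)*x3 + (-1)*x5), (0), ((-1)*x2 + (3/2)*x3 + (1)*x4 + (-1)*x5), (0), (0), (0), (0), ((4/3)*x2 + (-2)*x3 + (-2/3)*x4 + (4/3)*x5); leaf_tac.
        }
      }
      {
        exists ((1)*x5), ((1/3)*x2 + (-1/6)*x4 + (-2/3)*x5), (0), ((1/2)*x4), (0), (0), (0), (0), (0); leaf_tac.
      }
      {
        exists ((1)*x5), ((-1/3)*x1 + (1/3)*x2 + (-2/3)*x5), (0), ((-1)*x1 + (1)*x4), (0), (0), (0), (0), ((4/3)*x1 + (-2/3)*x4); leaf_tac.
      }
      {
        destruct (argmax_list [(-1)*x1 + (-2/3)*x2 + (1)*x3 + (1/3)*x4 + (-2/3)*x5; (-4/3)*x2 + (2)*x3 + (-1/3)*x4 + (-4/3)*x5; (1)*x1 + (-2/3)*x2 + (1)*x3 + (-2/3)*x4 + (-2/3)*x5]) as [m [Hin Hall]]; [discriminate|]; unpack Hall;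
        simpl in Hin; destruct Hin as [<-|[<-|[<-|[]]]].
        {
          exists ((1)*x5), ((1)*x2 + (-1)*x3), (0), ((2/3)*x2 + (-1)*x3 + (2/3)*x4 + (2/3)*x5), (0), ((-4/3)*x2 + (2)*x3 + (-1/3)*x4 + (-4/3)*x5), (0), (0), (0); leaf_tac.
        }
        {
          exists ((1)*x5), ((1)*x2 + (-1)*x3), (0), ((2/3)*x2 + (-1)*x3 + (2/3)*x4 + (2/3)*x5), (0), ((-4/3)*x2 + (2)*x3 + (-1/3)*x4 + (-4/3)*x5), (0), (0), (0); leaf_tac.
        }
        {
          exists ((1)*x5), ((1)*x2 + (-1)*x3), (0), ((-1)*x1 + (1)*x4), (0), ((-1)*x1 + (-2)*x2 + (3)*x3 + (-2)*x5), (0), (0), ((2)*x1 + (4/3)*x2 + (-2)*x3 + (-2/3)*x4 + (4/3)*x5); leaf_tac.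
        }
      }
    }
    {
      exists ((2/3)*x2 + (-1/3)*x4 + (-1/3)*x5), (0), ((-2/3)*x2 + (1/3)*x4 + (4/3)*x5), ((1/3)*x2 + (1/3)*x4 + (-2/3)*x5), (0), (0), (0), (0), (0); leaf_tac.
    }
    {
      exists ((-1/2)*x1 + (1/2)*x2), (0), ((1/2)*x1 + (-1/2)*x2 + (1)*x5), ((-1)*x1 + (1)*x4), (0), (0), (0), (0), ((1)*x1 + (1/3)*x2 + (-2/3)*x4 + (-2/3)*x5); leaf_tac.
    }
  }
  {
    destruct (argmax_list [(-1/2)*x2 + (1/3)*x3 + (1/3)*x4 + (1/3)*x5; (1/3)*x3 + (1/3)*x4 + (-2/3)*x5; (1)*x1 + (1/3)*x3 + (-2/3)*x4 + (-2/3)*x5; (1)*x1 + (-1/3)*x3 + (-1/3)*x4 + (2/3)*x5; (-1/3)*x3 + (2/3)*x4 + (2/3)*x5; (1/2)*x1 + (-1/6)*x3 + (1/3)*x4 + (1/3)*x5]) as [m [Hin Hall]]; [discriminate|]; unpack Hall;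
    simpl in Hin; destruct Hin as [<-|[<-|[<-|[<-|[<-|[<-|[]]]]]]].
    {
      destruct (argmax_list [(1/3)*x3 + (1/3)*x4 + (-2/3)*x5; (-1/2)*x2 + (2/3)*x3 + (-1/3)*x4 + (-1/3)*x5; (1/2)*x1 + (-1/4)*x2 + (1/3)*x3 + (-1/6)*x4 + (-1/6)*x5; (1)*x1 + (-1/3)*x3 + (-1/3)*x4 + (2/3)*x5; (1)*x1 + (1/2)*x2 + (-2/3)*x3 + (1/3)*x4 + (1/3)*x5]) as [m [Hin Hall]]; [discriminate|]; unpack Hall;
      simpl in Hin; destruct Hin as [<-|[<-|[<-|[<-|[<-|[]]]]]].
      {
        destruct (argmax_list [(-1/2)*x2 + (2/3)*x3 + (-1/3)*x4 + (-1/3)*x5; (1/2)*x1 + (-1/4)*x2 + (1/3)*x3 + (-1/6)*x4 + (-1/6)*x5; (1)*x1 + (1/2)*x2 + (-2/3)*x3 + (1/3)*x4 + (1/3)*x5]) as [m [Hin Hall]]; [discriminate|]; unpack Hall;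
        simpl in Hin; destruct Hin as [<-|[<-|[<-|[]]]].
        {
          exists ((1/2)*x2), (0), ((-1/2)*x2 + (1)*x5), ((1/2)*x2 + (-1/3)*x3 + (2/3)*x4 + (-1/3)*x5), (0), ((-1/2)*x2 + (2/3)*x3 + (-1/3)*x4 + (-1/3)*x5), (0), (0), (0); leaf_tac.
        }
        {
          exists ((1/2)*x2), (0), ((-1/2)*x2 + (1)*x5), ((-1/2)*x1 + (1/4)*x2 + (1/2)*x4 + (-1/2)*x5), (0), ((-1/2)*x1 + (-3/4)*x2 + (1)*x3 + (-1/2)*x4 + (-1/2)*x5), (0), (0), ((1)*x1 + (1/2)*x2 + (-2/3)*x3 + (1/3)*x4 + (1/3)*x5); leaf_tac.
        }
        {
          exists ((1/2)*x2), (0), ((-1/2)*x2 + (1)*x5), ((1)*x2 + (-1)*x3 + (1)*x4), (0), (0), (0), (0), ((-1)*x2 + (4/3)*x3 + (-2/3)*x4 + (-2/3)*x5); leaf_tac.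
        }
      }
      {
        exists ((1/2)*x2), (0), ((-1/3)*x3 + (2/3)*x4 + (2/3)*x5), (0), ((-1/2)*x2 + (1/3)*x3 + (-2/3)*x4 + (1/3)*x5), ((1/3)*x3 + (1/3)*x4 + (-2/3)*x5), (0), (0), (0); leaf_tac.
      }
      {
        destruct (argmax_list [(1/3)*x3 + (1/3)*x4 + (-2/3)*x5; (1)*x1 + (1/2)*x2 + (-2/3)*x3 + (1/3)*x4 + (1/3)*x5]) as [m [Hin Hall]]; [discriminate|]; unpack Hall;
        simpl in Hin; destruct Hin as [<-|[<-|[]]].
        {
          exists ((1/2)*x2), (0), ((-1/2)*x1 + (-1/4)*x2 + (1/2)*x4 + (1/2)*x5), (0), ((1/2)*x1 + (-1/4)*x2 + (-1/2)*x4 + (1/2)*x5), ((-1)*x1 + (-1/2)*x2 + (1)*x3 + (-1)*x5), (0), (0), ((1)*x1 + (1/2)*x2 + (-2/3)*x3 + (1/3)*x4 + (1/3)*x5); leaf_tac.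
        }
        {
          exists ((1/2)*x2), (0), ((-1/2)*x1 + (-1/4)*x2 + (1/2)*x4 + (1/2)*x5), (0), ((-1/2)*x1 + (-3/4)*x2 + (1)*x3 + (-1/2)*x4 + (-1/2)*x5), (0), (0), ((2)*x1 + (1)*x2 + (-2)*x3 + (2)*x5), ((-1)*x1 + (-1/2)*x2 + (4/3)*x3 + (1/3)*x4 + (-5/3)*x5); leaf_tac.
        }
      }
      {
        exists ((1/2)*x2), (0), ((-2/3)*x3 + (1/3)*x4 + (4/3)*x5), (0), ((-1/2)*x2 + (1/3)*x3 + (-2/3)*x4 + (1/3)*x5), (0), (0), ((2/3)*x3 + (2/3)*x4 + (-4/3)*x5), (0); leaf_tac.
      }
      {
        destruct (argmax_list [(1/3)*x3 + (1/3)*x4 + (-2/3)*x5; (-1)*x2 + (4/3)*x3 + (-2/3)*x4 + (-2/3)*x5]) as [m [Hin Hall]]; [discriminate|]; unpack Hall;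
        simpl in Hin; destruct Hin as [<-|[<-|[]]].
        {
          exists ((1/2)*x2), (0), ((-1/2)*x2 + (1)*x5), ((1)*x2 + (-1)*x3 + (1)*x4), (0), (0), (0), (0), ((-1)*x2 + (4/3)*x3 + (-2/3)*x4 + (-2/3)*x5); leaf_tac.
        }
        {
          exists ((1/2)*x2), (0), ((1/2)*x2 + (-1)*x3 + (1)*x4 + (1)*x5), (0), (0), (0), (0), ((-2)*x2 + (2)*x3 + (-2)*x4), ((1)*x2 + (-2/3)*x3 + (4/3)*x4 + (-2/3)*x5); leaf_tac.
        }
      }
    }
    {
      destruct (argmax_list [(-1)*x1 + (1/3)*x3 + (1/3)*x4 + (-2/3)*x5; (-1)*x2 + (1/3)*x3 + (1/3)*x4 + (4/3)*x5; (2/3)*x3 + (-1/3)*x4 + (-4/3)*x5; (1)*x1 + (1/3)*x3 + (-2/3)*x4 + (-2/3)*x5]) as [m [Hin Hall]]; [discriminate|]; unpack Hall;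
      simpl in Hin; destruct Hin as [<-|[<-|[<-|[<-|[]]]]].
      {
        exists ((1)*x5), (0), (0), ((-1/3)*x3 + (2/3)*x4 + (2/3)*x5), (0), ((2/3)*x3 + (-1/3)*x4 + (-4/3)*x5), (0), (0), (0); leaf_tac.
      }
      {
        destruct (argmax_list [(2/3)*x3 + (-1/3)*x4 + (-4/3)*x5; (1/2)*x1 + (-1/2)*x2 + (1/3)*x3 + (-1/6)*x4 + (1/3)*x5; (1)*x1 + (-1)*x2 + (-2/3)*x3 + (1/3)*x4 + (10/3)*x5]) as [m [Hin Hall]]; [discriminate|]; unpack Hall;
        simpl in Hin; destruct Hin as [<-|[<-|[<-|[]]]].
        {
          exists ((1)*x5), (0), (0), ((-1/3)*x3 + (2/3)*x4 + (2/3)*x5), (0), ((2/3)*x3 + (-1/3)*x4 + (-4/3)*x5), (0), (0), (0); leaf_tac.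
        }
        {
          exists ((1)*x5), (0), (0), ((-1/2)*x1 + (1/2)*x2 + (1/2)*x4 + (-1)*x5), (0), ((-1/2)*x1 + (1/2)*x2 + (1)*x3 + (-1/2)*x4 + (-3)*x5), (0), (0), ((1)*x1 + (-1)*x2 + (-2/3)*x3 + (1/3)*x4 + (10/3)*x5); leaf_tac.
        }
        {
          exists ((1)*x5), (0), (0), ((-1)*x3 + (1)*x4 + (2)*x5), (0), (0), (0), (0), ((4/3)*x3 + (-2/3)*x4 + (-8/3)*x5); leaf_tac.
        }
      }
      {
        exists ((1)*x5), (0), (0), ((-1/3)*x3 + (2/3)*x4 + (2/3)*x5), (0), ((2/3)*x3 + (-1/3)*x4 + (-4/3)*x5), (0), (0), (0); leaf_tac.
      }
      {
        exists ((1)*x5), (0), (0), ((-1)*x1 + (1)*x4), (0), ((-1)*x1 + (1)*x3 + (-2)*x5), (0), (0), ((2)*x1 + (-2/3)*x3 + (-2/3)*x4 + (4/3)*x5); leaf_tac.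
      }
    }
    {
      destruct (argmax_list [(-1)*x1 + (-1)*x2 + (1/3)*x3 + (4/3)*x4 + (4/3)*x5; (1/3)*x3 + (1/3)*x4 + (-2/3)*x5; (-2/3)*x3 + (4/3)*x4 + (4/3)*x5]) as [m [Hin Hall]]; [discriminate|]; unpack Hall;
      simpl in Hin; destruct Hin as [<-|[<-|[<-|[]]]].
      {
        destruct (argmax_list [(1/3)*x3 + (1/3)*x4 + (-2/3)*x5; (-2/3)*x3 + (4/3)*x4 + (4/3)*x5]) as [m [Hin Hall]]; [discriminate|]; unpack Hall;
        simpl in Hin; destruct Hin as [<-|[<-|[]]].
        {
          exists ((-1)*x1 + (1)*x4 + (1)*x5), (0), (0), (0), ((1)*x1 + (-1)*x4), ((1)*x3 + (-1)*x4 + (-2)*x5), (0), (0), ((-2/3)*x3 + (4/3)*x4 + (4/3)*x5); leaf_tac.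
        }
        {
          exists ((-1)*x1 + (1)*x4 + (1)*x5), (0), (0), (0), ((1)*x1 + (1)*x3 + (-2)*x4 + (-2)*x5), (0), (0), ((-2)*x3 + (2)*x4 + (4)*x5), ((4/3)*x3 + (-2/3)*x4 + (-8/3)*x5); leaf_tac.
        }
      }
      {
        exists ((-1)*x1 + (1)*x4 + (1)*x5), (0), (0), (0), ((1)*x1 + (-1)*x4), ((1)*x3 + (-1)*x4 + (-2)*x5), (0), (0), ((-2/3)*x3 + (4/3)*x4 + (4/3)*x5); leaf_tac.
      }
      {
        exists ((-1)*x1 + (1)*x4 + (1)*x5), (0), (0), (0), ((1)*x1 + (1)*x3 + (-2)*x4 + (-2)*x5), (0), (0), ((-2)*x3 + (2)*x4 + (4)*x5), ((4/3)*x3 + (-2/3)*x4 + (-8/3)*x5); leaf_tac.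
      }
    }
    {
      exists ((-1)*x1 + (2/3)*x3 + (2/3)*x4 + (-1/3)*x5), (0), ((-2/3)*x3 + (1/3)*x4 + (4/3)*x5), (0), ((1)*x1 + (-1/3)*x3 + (-4/3)*x4 + (2/3)*x5), (0), (0), ((2/3)*x3 + (2/3)*x4 + (-4/3)*x5), (0); leaf_tac.
    }
    {
      exists ((2/3)*x3 + (-1/3)*x4 + (-1/3)*x5), (0), ((-2/3)*x3 + (1/3)*x4 + (4/3)*x5), ((1/3)*x3 + (1/3)*x4 + (-2/3)*x5), (0), (0), (0), (0), (0); leaf_tac.
    }
    {
      destruct (argmax_list [(-1/2)*x1 + (-1)*x2 + (5/6)*x3 + (1/3)*x4 + (1/3)*x5; (1/3)*x3 + (1/3)*x4 + (-2/3)*x5; (1)*x1 + (1/3)*x3 + (-2/3)*x4 + (-2/3)*x5]) as [m [Hin Hall]]; [discriminate|]; unpack Hall;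
      simpl in Hin; destruct Hin as [<-|[<-|[<-|[]]]].
      {
        destruct (argmax_list [(1/3)*x3 + (1/3)*x4 + (-2/3)*x5; (1)*x1 + (1/3)*x3 + (-2/3)*x4 + (-2/3)*x5]) as [m [Hin Hall]]; [discriminate|]; unpack Hall;
        simpl in Hin; destruct Hin as [<-|[<-|[]]].
        {
          exists ((-1/2)*x1 + (1/2)*x3), (0), ((1/2)*x1 + (-1/2)*x3 + (1)*x5), ((-1)*x1 + (1)*x4), (0), (0), (0), (0), ((1)*x1 + (1/3)*x3 + (-2/3)*x4 + (-2/3)*x5); leaf_tac.
        }
        {
          exists ((-1/2)*x1 + (1/2)*x3), (0), ((-1/2)*x1 + (-1/2)*x3 + (1)*x4 + (1)*x5), (0), (0), (0), (0), ((2)*x1 + (-2)*x4), ((-1)*x1 + (1/3)*x3 + (4/3)*x4 + (-2/3)*x5); leaf_tac.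
        }
      }
      {
        exists ((-1/2)*x1 + (1/2)*x3), (0), ((1/2)*x1 + (-1/2)*x3 + (1)*x5), ((-1)*x1 + (1)*x4), (0), (0), (0), (0), ((1)*x1 + (1/3)*x3 + (-2/3)*x4 + (-2/3)*x5); leaf_tac.
      }
      {
        exists ((-1/2)*x1 + (1/2)*x3), (0), ((-1/2)*x1 + (-1/2)*x3 + (1)*x4 + (1)*x5), (0), (0), (0), (0), ((2)*x1 + (-2)*x4), ((-1)*x1 + (1/3)*x3 + (4/3)*x4 + (-2/3)*x5); leaf_tac.
      }
    }
  }
Qed.

Lemma achieve_all : forall Rt : nat -> R,
  (0 <= Rt 1%nat /\ 0 <= Rt 2%nat /\ 0 <= Rt 3%nat /\ 0 <= Rt 4%nat /\
   0 <= Rt 5%nat /\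
   Rt 3%nat <= 2 /\ Rt 5%nat <= 1 /\
   Rt 1%nat + Rt 3%nat <= 3 /\ Rt 1%nat + Rt 5%nat <= 2 /\
   Rt 4%nat + Rt 5%nat <= 2 /\
   Rt 1%nat + Rt 2%nat + Rt 5%nat <= 3 /\
   Rt 1%nat + Rt 4%nat + Rt 5%nat <= 3 /\
   Rt 2%nat + Rt 4%nat + Rt 5%nat <= 3 /\
   Rt 3%nat + Rt 4%nat + Rt 5%nat <= 3) ->
  capacity_region 5 3 S_ex A_ex C_ex Rt.
Proof.
  intros Rt (H1&H2&H3&H4&H5&H6&H7&H8&H9&H10&H11&H12&H13&H14) eps Heps.
  destruct (decomp (Rt 1%nat) (Rt 2%nat) (Rt 3%nat) (Rt 4%nat) (Rt 5%nat) H1 H2 H3 H4 H5 H6 H7 H8 H9 H10 H11 H12 H13 H14)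
    as (l0&l1&l2&l3&l4&l5&l6&l7&l8&G0&G1&G2&G3&G4&G5&G6&G7&G8&Gs&D1&D2&D3&D4&D5).
  set (mu := fun t : nat => match t with
     | 0%nat => l0 | 1%nat => l1 | 2%nat => l2 | 3%nat => l3 | 4%nat => l4 | 5%nat => l5 | 6%nat => l6
     | 7%nat => l7 / 2 | 8%nat => l8 / 2 | _ => 0 end).
  exists (fun j => Rmax 0 (Rt j - eps / 2)). split.
  - apply (achieve_mu _ mu (eps / 2)).
    + intros j _. apply Rmax_l.
    + intros t. unfold mu. destruct t as [|[|[|[|[|[|[|[|[|t]]]]]]]]]; lra.
    + unfold senderload, mu. simpl. lra.
    + lra.
    + intros j Hj. unfold Rmax. destruct (Rle_dec 0 (Rt j - eps / 2)) as [Hle|Hle]; [right|left; auto].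
      destruct j as [|[|[|[|[|[|j]]]]]]; try lia; unfold mu; simpl; lra.
  - intros j Hj. unfold Rmax. destruct (Rle_dec 0 (Rt j - eps / 2)) as [Hle|Hle].
    + rewrite Rabs_right; lra.
    + assert (0 <= Rt j) by (destruct j as [|[|[|[|[|[|j]]]]]]; try lia; auto).
      rewrite Rabs_right; lra.
Qed.

Theorem mainTheorem7 : forall Rt : nat -> R,
  capacity_region 5 3 S_ex A_ex C_ex Rt <->
  (0 <= Rt 1%nat /\ 0 <= Rt 2%nat /\ 0 <= Rt 3%nat /\ 0 <= Rt 4%nat /\
   0 <= Rt 5%nat /\
   Rt 3%nat <= 2 /\ Rt 5%nat <= 1 /\
   Rt 1%nat + Rt 3%nat <= 3 /\ Rt 1%nat + Rt 5%nat <= 2 /\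
   Rt 4%nat + Rt 5%nat <= 2 /\
   Rt 1%nat + Rt 2%nat + Rt 5%nat <= 3 /\
   Rt 1%nat + Rt 4%nat + Rt 5%nat <= 3 /\
   Rt 2%nat + Rt 4%nat + Rt 5%nat <= 3 /\
   Rt 3%nat + Rt 4%nat + Rt 5%nat <= 3).
Proof.
  intros Rt. split; [apply conv_all| apply achieve_all].
Qed.
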